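(* Let $\alpha(t)=(x(t),y(t))_{t\in T}$ be a decreasing path and $D=\{t-s:s,t\in T,\ t>s\}$. Then there exists a function $\varphi:D\to\mathbb{R}$ (necessarily nonnegative) with $$x(s)y(s)+x(t)y(t)-2x(s)y(t)=\varphi(t-s)\quad\text{for all } s,t\in T,\ s<t,$$ if and only if one of the following holds: (i) $x(t)=a,\ y(t)=b-ct$ for all $t\in T$, or $x(t)=b+ct,\ y(t)=a$ for all $t\in T$, for some $b\in\mathbb{R}$ and constants $a,c>0$; in both cases $\varphi(u)=acu$, $u\in D$. (ii) $x(t)=a+d(t-s^* )\mathbf{1}_{\{t>s^*\}}$, $y(t)=b-c(t-s^* )\mathbf{1}_{\{t\le s^*\}}$, $t\in T$, for some $s^*\in T^\circ$ and constants $a,b,c,d>0$ with $ac=bd$; in this case $\varphi(u)=acu$, $u\in D$. (iii) $x(t)=a+bt,\ y(t)=c-dt$, $t\in T$, for some $a,c\in\mathbb{R}$ and constants $b,d>0$; in this case $\varphi(u)=(ad+bc)u-bdu^2$, $u\in D$. (iv) $x(t)=ae^{ct},\ y(t)=be^{-ct}$, $t\in T$, for some constants $a,b,c>0$; in this case $\varphi(u)=2ab(1-e^{-cu})$, $u\in D$.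
   Context: $T\subseteq\mathbb{R}$ is an interval with interior $T^\circ$. A decreasing path is $\alpha(t)=(x(t),y(t))_{t\in T}$ with $x$ nondecreasing and $y$ nonincreasing continuous functions on $T$, both strictly positive on $T^\circ$, at least one not identically constant. *)

(* Defs.v *)
From Stdlib Require Import Reals Lra.
Open Scope R_scope.

Definition is_interval (T : R -> Prop) : Prop :=
  forall a b c, T a -> T c -> a <= b -> b <= c -> T b.

Definition interior_pt (T : R -> Prop) (t : R) : Prop :=
  exists r s, T r /\ T s /\ r < t /\ t < s.

Definition cont_on (T : R -> Prop) (f : R -> R) : Prop :=
  forall t, T t -> forall eps, 0 < eps ->
    exists delta, 0 < delta /\
      forall s, T s -> Rabs (s - t) < delta -> Rabs (f s - f t) < eps.

Definition nondecr_on (T : R -> Prop) (f : R -> R) : Prop :=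
  forall s t, T s -> T t -> s <= t -> f s <= f t.

Definition nonincr_on (T : R -> Prop) (f : R -> R) : Prop :=
  forall s t, T s -> T t -> s <= t -> f t <= f s.

Definition const_on (T : R -> Prop) (f : R -> R) : Prop :=
  forall s t, T s -> T t -> f s = f t.

Definition decreasing_path (T : R -> Prop) (x y : R -> R) : Prop :=
  nondecr_on T x /\ nonincr_on T y /\ cont_on T x /\ cont_on T y /\
  (forall t, interior_pt T t -> 0 < x t /\ 0 < y t) /\
  (~ const_on T x \/ ~ const_on T y).

Definition inD (T : R -> Prop) (u : R) : Prop :=
  exists s t, T s /\ T t /\ s < t /\ u = t - s.

Definition phi_eq (T : R -> Prop) (x y phi : R -> R) : Prop :=
  forall s t, T s -> T t -> s < t ->
    x s * y s + x t * y t - 2 * x s * y t = phi (t - s).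

Definition case_i (T : R -> Prop) (x y phi : R -> R) : Prop :=
  exists a b c, 0 < a /\ 0 < c /\
    ((forall t, T t -> x t = a /\ y t = b - c * t) \/
     (forall t, T t -> x t = b + c * t /\ y t = a)) /\
    (forall u, inD T u -> phi u = a * c * u).

Definition case_ii (T : R -> Prop) (x y phi : R -> R) : Prop :=
  exists sst a b c d, interior_pt T sst /\
    0 < a /\ 0 < b /\ 0 < c /\ 0 < d /\ a * c = b * d /\
    (forall t, T t ->
       x t = a + (if Rlt_dec sst t then d * (t - sst) else 0) /\
       y t = b - (if Rle_dec t sst then c * (t - sst) else 0)) /\
    (forall u, inD T u -> phi u = a * c * u).

Definition case_iii (T : R -> Prop) (x y phi : R -> R) : Prop :=
  exists a b c d, 0 < b /\ 0 < d /\
    (forall t, T t -> x t = a + b * t /\ y t = c - d * t) /\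
    (forall u, inD T u -> phi u = (a * d + b * c) * u - b * d * u ^ 2).

Definition case_iv (T : R -> Prop) (x y phi : R -> R) : Prop :=
  exists a b c, 0 < a /\ 0 < b /\ 0 < c /\
    (forall t, T t -> x t = a * exp (c * t) /\ y t = b * exp (- (c * t))) /\
    (forall u, inD T u -> phi u = 2 * a * b * (1 - exp (- (c * u)))).

(* Main.v *)
Require Import Defs.
From Stdlib Require Import Reals Lra Psatz Classical.
From Coquelicot Require Import Coquelicot.
Open Scope R_scope.


Definition openI (I : R -> Prop) := forall z, I z -> exists e, 0 < e /\ forall z', Rabs (z' - z) < e -> I z'.

Lemma loc_of (z e : R) (P : R -> Prop) : 0 < e -> (forall y, Rabs (y - z) < e -> P y) -> locally z P.
Proof. intros He H. exists (mkposreal e He). intros y Hy. apply H. exact Hy. Qed.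

Lemma cont_eps (f : R -> R) z : continuous f z -> forall eps, 0 < eps -> exists d, 0 < d /\ forall y, Rabs (y - z) < d -> Rabs (f y - f z) < eps.
Proof.
  intros Hc eps He.
  assert (H := Hc (fun u => Rabs (u - f z) < eps)).
  destruct H as [d Hd].
  { exists (mkposreal eps He). intros u Hu. exact Hu. }
  exists d. split. apply cond_pos. intros y Hy. apply (Hd y). exact Hy.
Qed.

Lemma cont_of_eps (f : R -> R) z : (forall eps, 0 < eps -> exists d, 0 < d /\ forall y, Rabs (y - z) < d -> Rabs (f y - f z) < eps) -> continuous f z.
Proof.
  intros H. apply (proj1 (continuity_pt_filterlim f z)).
  unfold continuity_pt, continue_in, limit1_in, limit_in. simpl.
  intros eps He. destruct (H eps He) as [d [Hd Hd']].
  exists d. split. lra. intros y [_ Hy]. apply Hd'. exact Hy.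
Qed.

Lemma interior_cont T f z : is_interval T -> cont_on T f -> interior_pt T z -> continuous f z.
Proof.
  intros HI Hc [r [s [Hr [Hs [Hrz Hzs]]]]].
  apply cont_of_eps. intros eps He.
  assert (Tz : T z) by (apply (HI r z s Hr Hs); lra).
  destruct (Hc z Tz eps He) as [d [Hd Hd']].
  exists (Rmin d (Rmin (z - r) (s - z))). split.
  { repeat apply Rmin_pos; lra. }
  intros y Hy. apply Hd'.
  - assert (Rabs (y - z) < z - r) by (eapply Rlt_le_trans; [exact Hy|]; eauto using Rmin_r, Rle_trans, Rmin_l).
    assert (Rabs (y - z) < s - z) by (eapply Rlt_le_trans; [exact Hy|]; eauto using Rmin_r, Rle_trans, Rmin_l).
    apply Rabs_def2 in H. apply Rabs_def2 in H0. apply (HI r y s Hr Hs); lra.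
  - eapply Rlt_le_trans; [exact Hy|]; apply Rmin_l.
Qed.


Ltac req := match goal with |- ?a = ?b => change (@eq R a b) end.

Lemma half_bound D a b : D <> 0 -> Rabs a < Rabs D/4 -> Rabs b < Rabs D/4 -> 1/2 <= (D + a - b)/D.
Proof.
intros. destruct (Rlt_dec 0 D).
- rewrite (Rabs_pos_eq D) in H0, H1 by lra. apply Rabs_def2 in H0. apply Rabs_def2 in H1.
  assert (/D > 0) by (apply Rinv_0_lt_compat; lra). assert (D * /D = 1) by (field; lra). unfold Rdiv. nra.
- rewrite (Rabs_left D) in H0, H1 by lra. apply Rabs_def2 in H0. apply Rabs_def2 in H1.
  assert (/D < 0) by (apply Rinv_lt_0_compat; lra). assert (D * /D = 1) by (field; lra). unfold Rdiv. nra.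
Qed.

Lemma is_derive_eq (f : R -> R) z l l' : is_derive f z l -> l = l' -> is_derive f z l'.
Proof. intros H E; subst; exact H. Qed.

Lemma cont_shift (f : R -> R) a w : continuous f (a + w) -> continuous (fun u => f (a + u)) w.
Proof.
  intros H. apply (continuous_comp (fun u => a + u) f w).
  - apply (continuous_plus (fun _ => a) (fun u => u)). apply continuous_const. apply continuous_id.
  - exact H.
Qed.

Lemma RInt_shift (f : R -> R) z d : ex_RInt f z (z + d) -> RInt (fun w => f (z + w)) 0 d = RInt f z (z + d).
Proof.
  intros H.
  assert (H' : ex_RInt f (1 * 0 + z) (1 * d + z)) by (replace (1*0+z) with z by ring; replace (1*d+z) with (z+d) by ring; exact H).
  pose proof (RInt_comp_lin f 1 z 0 d H') as E.
  replace (1*0+z) with z in E by ring. replace (1*d+z) with (z+d) in E by ring.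
  rewrite <- E. apply RInt_ext. intros w _. unfold scal; simpl; unfold mult; simpl. rewrite Rmult_1_l. f_equal. ring.
Qed.

Lemma is_derive_shift (a x : R) : is_derive (fun z : R => z + a) x 1.
Proof. auto_derive; auto; ring. Qed.

Lemma der_shift (f : R -> R) a l : is_derive f a l -> is_derive (fun w => f (a + w)) 0 l.
Proof.
  intros H. eapply is_derive_eq.
  - apply (is_derive_comp f (fun w => a + w)).
    + rewrite Rplus_0_r. exact H.
    + assert (H1 : is_derive (fun w : R => a + w) 0 1) by (auto_derive; auto; ring). exact H1.
  - unfold scal; simpl; unfold mult; simpl. ring.
Qed.

Section CLsec.
Variables (I : R -> Prop) (f : R -> R).
Hypothesis HO : openI I.
Hypothesis Hc : forall z, I z -> continuous f z.
Hypothesis Hcr : forall z1 z2 z3 w, I z1 -> I z2 -> I z3 -> I (z1+w) -> I (z2+w) -> I (z3+w) ->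
     (f (z3+w) - f (z2+w)) * (f z1 - f z2) = (f z3 - f z2) * (f (z1+w) - f (z2+w)).

Variables z1 z2 : R.
Hypotheses (I1 : I z1) (I2 : I z2) (Hne : f z1 <> f z2).

Let D := f z1 - f z2.
Let kap w := (f (z1 + w) - f (z2 + w)) / D.

Lemma D_nz : D <> 0.
Proof. unfold D; intro; apply Hne; lra. Qed.

Lemma EQ z w : I z -> I (z+w) -> I (z1+w) -> I (z2+w) -> f (z+w) = f (z2+w) + kap w * (f z - f z2).
Proof.
  intros Iz Izw I1w I2w.
  assert (H := Hcr z1 z2 z w I1 I2 Iz I1w I2w Izw). fold D in H.
  assert (HD := D_nz).
  unfold kap.
  assert (E: f (z + w) - f (z2 + w) = (f z - f z2) * (f (z1 + w) - f (z2 + w)) / D).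
  { apply (Rmult_eq_reg_r D); [|exact HD]. rewrite H. field. exact HD. }
  replace (f (z+w)) with ((f (z + w) - f (z2 + w)) + f (z2+w)) by ring. rewrite E. field. exact HD.
Qed.

Lemma CL_diff z0 : I z0 -> ex_derive f z0.
Proof.
  intros I0.
  assert (HD := D_nz).
  destruct (HO z1 I1) as [e1 [He1 H1]].
  destruct (HO z2 I2) as [e2 [He2 H2]].
  destruct (HO z0 I0) as [e0 [He0 H0]].
  assert (HD4 : 0 < Rabs D / 4) by (assert (0 < Rabs D) by (apply Rabs_pos_lt; exact HD); lra).
  destruct (cont_eps f z1 (Hc z1 I1) _ HD4) as [d1 [Hd1 Hd1']].
  destruct (cont_eps f z2 (Hc z2 I2) _ HD4) as [d2 [Hd2 Hd2']].
  set (dl := Rmin (Rmin e1 e2) (Rmin (Rmin d1 d2) e0) / 3).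
  assert (Hdl : 0 < dl /\ 3 * dl <= e1 /\ 3 * dl <= e2 /\ 3 * dl <= d1 /\ 3 * dl <= d2 /\ 3 * dl <= e0).
  { unfold dl. assert (0 < Rmin (Rmin e1 e2) (Rmin (Rmin d1 d2) e0)) by (repeat apply Rmin_pos; lra).
    pose proof (Rmin_l (Rmin e1 e2) (Rmin (Rmin d1 d2) e0)).
    pose proof (Rmin_r (Rmin e1 e2) (Rmin (Rmin d1 d2) e0)).
    pose proof (Rmin_l e1 e2). pose proof (Rmin_r e1 e2).
    pose proof (Rmin_l (Rmin d1 d2) e0). pose proof (Rmin_r (Rmin d1 d2) e0).
    pose proof (Rmin_l d1 d2). pose proof (Rmin_r d1 d2). repeat split; lra. }
  destruct Hdl as [Hdl Hdl1].
  destruct Hdl1 as [Ha [Hb [Hc1 [Hd He]]]].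
  assert (Iw : forall w, 0 <= w <= dl -> I (z1 + w) /\ I (z2 + w)).
  { intros w Hw. split; [apply H1 | apply H2]; replace (_ + w - _) with w by ring; rewrite Rabs_pos_eq; lra. }
  assert (Iz : forall t, Rabs (t - z0) < 2 * dl -> I t).
  { intros t Ht. apply H0. lra. }
  assert (kap_cont : forall w, 0 <= w <= dl -> continuous kap w).
  { intros w Hw. destruct (Iw w Hw) as [A B]. unfold kap.
    apply (continuous_mult (fun w => f (z1 + w) - f (z2 + w)) (fun _ => / D)); [|apply continuous_const].
    apply (continuous_plus (fun w => f (z1 + w)) (fun w => - f (z2 + w))).
    - apply cont_shift. apply Hc. exact A.
    - apply (continuous_opp (fun w => f (z2 + w))). apply cont_shift. apply Hc. exact B. }
  assert (f2_cont : forall w, 0 <= w <= dl -> continuous (fun w => f (z2 + w)) w).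
  { intros w Hw. apply cont_shift. apply Hc. apply (Iw w Hw). }
  assert (kap_ge : forall w, 0 <= w <= dl -> 1/2 <= kap w).
  { intros w Hw. unfold kap.
    replace (f (z1 + w) - f (z2 + w)) with (D + (f (z1 + w) - f z1) - (f (z2 + w) - f z2)) by (unfold D; ring).
    apply half_bound. exact HD.
    - apply Hd1'. replace (z1 + w - z1) with w by ring. rewrite Rabs_pos_eq; lra.
    - apply Hd2'. replace (z2 + w - z2) with w by ring. rewrite Rabs_pos_eq; lra. }
  set (K := RInt kap 0 dl).
  set (L := RInt (fun w => f (z2 + w)) 0 dl).
  assert (exk : ex_RInt kap 0 dl).
  { apply (@ex_RInt_continuous R_CompleteNormedModule). intros w Hw. rewrite Rmin_left in Hw by lra. rewrite Rmax_right in Hw by lra. apply kap_cont; lra. }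
  assert (exl : ex_RInt (fun w => f (z2 + w)) 0 dl).
  { apply (@ex_RInt_continuous R_CompleteNormedModule). intros w Hw. rewrite Rmin_left in Hw by lra. rewrite Rmax_right in Hw by lra. apply f2_cont; lra. }
  assert (HK : dl / 2 <= K).
  { unfold K. apply Rle_trans with (RInt (fun _ => 1/2) 0 dl).
    - rewrite RInt_const. simpl. unfold scal; simpl; unfold mult; simpl. lra.
    - apply RInt_le. lra. apply ex_RInt_const. exact exk. intros w Hw. apply kap_ge. lra. }
  set (Phi := fun v => RInt f z0 v).
  assert (exf : forall a b, Rabs (a - z0) < 2 * dl -> Rabs (b - z0) < 2 * dl -> ex_RInt f a b).
  { intros a b Ha' Hb'. apply (@ex_RInt_continuous R_CompleteNormedModule). intros t Ht. apply Hc. apply Iz.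
    apply Rabs_def2 in Ha'. apply Rabs_def2 in Hb'.
    destruct (Rle_dec a b).
    - rewrite Rmin_left in Ht by lra. rewrite Rmax_right in Ht by lra. apply Rabs_def1; lra.
    - rewrite Rmin_right in Ht by lra. rewrite Rmax_left in Ht by lra. apply Rabs_def1; lra. }
  assert (Hrep : forall z, Rabs (z - z0) < dl -> f z = f z2 + (Phi (z + dl) - Phi z - L) / K).
  { intros z Hz. apply Rabs_def2 in Hz.
    assert (E1 : Phi (z + dl) - Phi z = RInt f z (z + dl)).
    { unfold Phi. rewrite <- (RInt_Chasles f z0 z (z + dl)).
      - simpl. unfold plus; simpl. ring.
      - apply exf; rewrite ?Rminus_diag, ?Rabs_R0; try apply Rabs_def1; lra.
      - apply exf; apply Rabs_def1; lra. }
    assert (E2 : RInt f z (z + dl) = L + (f z - f z2) * K).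
    { rewrite <- RInt_shift by (apply exf; apply Rabs_def1; lra).
      rewrite (RInt_ext _ (fun w => plus (f (z2 + w)) (scal (f z - f z2) (kap w)))).
      - rewrite (@RInt_plus R_CompleteNormedModule); [| exact exl | apply (@ex_RInt_scal R_CompleteNormedModule); exact exk].
        rewrite (@RInt_scal R_CompleteNormedModule) by exact exk. simpl. unfold plus, scal; simpl; unfold mult; simpl. unfold L, K. ring.
      - intros w Hw. rewrite Rmin_left in Hw by lra. rewrite Rmax_right in Hw by lra.
        destruct (Iw w ltac:(lra)) as [A B].
        rewrite EQ; [| apply Iz; apply Rabs_def1; lra | apply Iz; apply Rabs_def1; lra | exact A | exact B].
        unfold plus, scal; simpl; unfold mult; simpl. ring. }
    rewrite E1, E2. field. lra. }
  assert (HPhi : forall v, Rabs (v - z0) < 2 * dl -> is_derive Phi v (f v)).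
  { intros v Hv. apply (@is_derive_RInt R_CompleteNormedModule f Phi z0 v).
    - apply (loc_of v (2 * dl - Rabs (v - z0))). lra.
      intros b Hbb. apply (@RInt_correct R_CompleteNormedModule). apply exf.
      + rewrite Rminus_diag, Rabs_R0; lra.
      + assert (Rabs (b - z0) <= Rabs (b - v) + Rabs (v - z0)) by (replace (b - z0) with ((b - v) + (v - z0)) by ring; apply Rabs_triang). simpl in Hbb. unfold ball in Hbb. simpl in Hbb. unfold AbsRing_ball, abs, minus, plus, opp in Hbb. simpl in Hbb. lra.
    - apply Hc. apply Iz. exact Hv. }
  exists ((f (z0 + dl) - f z0) / K).
  apply (is_derive_ext_loc (fun z => f z2 + /K * (Phi (z + dl) - Phi z - L))).
  - apply (loc_of z0 dl _ Hdl). intros t Ht. cbv beta. rewrite (Hrep t Ht). unfold Rdiv. rewrite (Rmult_comm (/K)). reflexivity.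
  - eapply is_derive_eq.
    + apply (is_derive_plus (fun _ => f z2) (fun z => /K * (Phi (z + dl) - Phi z - L))).
      apply is_derive_const.
      apply is_derive_scal.
      apply (is_derive_minus (fun z => Phi (z + dl) - Phi z) (fun _ => L)); [|apply is_derive_const].
      apply (is_derive_minus (fun z => Phi (z + dl)) Phi).
      * apply (is_derive_comp Phi (fun z => z + dl)).
        -- apply HPhi. replace (z0 + dl - z0) with dl by ring. rewrite Rabs_pos_eq; lra.
        -- apply is_derive_shift.
      * apply HPhi. rewrite Rminus_diag, Rabs_R0; lra.
    + simpl. unfold plus, minus, scal, zero, one, opp; simpl. unfold mult, plus, opp; simpl. field. lra.
Qed.

Lemma CL_ode : exists c e, forall z, I z -> is_derive f z (c * f z + e).
Proof.
  assert (HD := D_nz).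
  set (c := (Derive f z1 - Derive f z2) / D).
  exists c, (Derive f z2 - c * f z2).
  intros z Iz.
  assert (Dz: is_derive f z (Derive f z)) by (apply Derive_correct; apply CL_diff; exact Iz).
  assert (D1: is_derive f z1 (Derive f z1)) by (apply Derive_correct; apply CL_diff; exact I1).
  assert (D2: is_derive f z2 (Derive f z2)) by (apply Derive_correct; apply CL_diff; exact I2).
  destruct (HO z Iz) as [e0 [He0 H0]].
  destruct (HO z1 I1) as [e1 [He1 H1]].
  destruct (HO z2 I2) as [e2 [He2 H2]].
  assert (Hm : 0 < Rmin e0 (Rmin e1 e2)) by (repeat apply Rmin_pos; lra).
  pose proof (Rmin_l e0 (Rmin e1 e2)). pose proof (Rmin_r e0 (Rmin e1 e2)).
  pose proof (Rmin_l e1 e2). pose proof (Rmin_r e1 e2).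
  assert (A1 := der_shift f z _ Dz).
  assert (A2 : is_derive (fun w => f (z2 + w) + kap w * (f z - f z2)) 0 (Derive f z2 + c * (f z - f z2))).
  { unfold kap. eapply is_derive_eq.
    - apply (is_derive_plus (fun w => f (z2 + w)) (fun w => (f (z1 + w) - f (z2 + w)) / D * (f z - f z2))).
      + apply der_shift. exact D2.
      + apply (is_derive_ext (fun w => (f z - f z2) / D * (f (z1 + w) - f (z2 + w)))).
        { intros t. cbv beta. req. field. exact HD. }
        apply is_derive_scal.
        apply (is_derive_minus (fun w => f (z1 + w)) (fun w => f (z2 + w))); [apply (der_shift f z1 _ D1) | apply (der_shift f z2 _ D2)].
    - unfold c. simpl. unfold plus, minus, opp; simpl. unfold plus; simpl. req. field. exact HD. }
  assert (A3 : is_derive (fun w => f (z + w)) 0 (Derive f z2 + c * (f z - f z2))).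
  { apply (is_derive_ext_loc (fun w => f (z2 + w) + kap w * (f z - f z2))); [|exact A2].
    apply (loc_of 0 _ _ Hm). intros w Hw. rewrite Rminus_0_r in Hw. symmetry. apply EQ.
    - exact Iz.
    - apply H0. replace (z + w - z) with w by ring. lra.
    - apply H1. replace (z1 + w - z1) with w by ring. lra.
    - apply H2. replace (z2 + w - z2) with w by ring. lra. }
  apply is_derive_unique in A1. apply is_derive_unique in A3.
  rewrite A1 in A3. rewrite A3 in Dz. eapply is_derive_eq. exact Dz. req. ring.
Qed.

End CLsec.

Lemma CL (I : R -> Prop) (f : R -> R) : openI I -> (forall z, I z -> continuous f z) ->
  (forall z1 z2 z3 w, I z1 -> I z2 -> I z3 -> I (z1+w) -> I (z2+w) -> I (z3+w) ->
     (f (z3+w) - f (z2+w)) * (f z1 - f z2) = (f z3 - f z2) * (f (z1+w) - f (z2+w))) ->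
  exists c e, forall z, I z -> is_derive f z (c * f z + e).
Proof.
  intros HO Hc Hcr.
  destruct (classic (exists z1 z2, I z1 /\ I z2 /\ f z1 <> f z2)) as [[z1 [z2 [I1 [I2 Hne]]]] | Hn].
  - exact (CL_ode I f HO Hc Hcr z1 z2 I1 I2 Hne).
  - exists 0, 0. intros z Iz. destruct (HO z Iz) as [e [He H]].
    apply (is_derive_ext_loc (fun _ => f z)).
    + apply (loc_of z e _ He). intros t Ht. destruct (Req_dec (f z) (f t)) as [E|E]; [exact E|].
      exfalso. apply Hn. exists z, t. repeat split; auto.
    + eapply is_derive_eq. apply is_derive_const. simpl. unfold zero; simpl. ring.
Qed.


Lemma interior_T T z : is_interval T -> interior_pt T z -> T z.
Proof. intros HI [r [s [Hr [Hs [H1 H2]]]]]. apply (HI r z s Hr Hs); lra. Qed.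

Lemma const_of_der0 (I : R -> Prop) (h : R -> R) : is_interval I ->
  (forall z, I z -> is_derive h z 0) -> forall a b, I a -> I b -> h a = h b.
Proof.
  intros HI Hd.
  assert (K : forall a b, I a -> I b -> a < b -> h a = h b).
  { intros a b Ia Ib Hab. apply (eq_is_derive h a b); [|exact Hab].
    intros t Ht. apply Hd. apply (HI a t b Ia Ib); lra. }
  intros a b Ia Ib. destruct (Rtotal_order a b) as [H|[H|H]].
  - apply K; auto.
  - subst; reflexivity.
  - symmetry; apply K; auto.
Qed.

Lemma der_expneg c z : is_derive (fun z => exp (-(c*z))) z (-c * exp (-(c*z))).
Proof. auto_derive; auto. ring. Qed.

Lemma ODE (I : R -> Prop) (f : R -> R) (c e : R) : is_interval I -> (forall z, I z -> is_derive f z (c * f z + e)) ->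
 (c <> 0 /\ exists A B, forall z, I z -> f z = A + B * exp (c * z)) \/
 (c = 0 /\ exists A B, forall z, I z -> f z = A + B * z).
Proof.
  intros HI Hd.
  destruct (classic (exists z0, I z0)) as [[z0 I0]|Hn].
  2:{ destruct (Req_dec c 0); [right|left]; split; auto; exists 0, 0; intros z Iz; exfalso; apply Hn; eauto. }
  destruct (Req_dec c 0) as [Hc|Hc].
  - right. split; auto.
    set (h := fun z => f z - e * z).
    assert (Hh : forall z, I z -> is_derive h z 0).
    { intros z Iz. unfold h. eapply is_derive_eq.
      - apply (is_derive_minus f (fun z => e * z)). apply Hd; exact Iz.
        apply is_derive_scal. apply is_derive_id.
      - simpl. unfold minus, plus, opp, one; simpl. rewrite Hc. req. ring. }
    exists (h z0), e. intros z Iz. rewrite (const_of_der0 I h HI Hh z0 z I0 Iz). unfold h. ring.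
  - left. split; auto.
    set (h := fun z => (f z + e / c) * exp (-(c*z))).
    assert (Hh : forall z, I z -> is_derive h z 0).
    { intros z Iz. unfold h. eapply is_derive_eq.
      - apply (is_derive_mult (fun z => f z + e / c) (fun z => exp (-(c*z)))).
        + apply (is_derive_plus f (fun _ => e / c)). apply Hd; exact Iz. apply is_derive_const.
        + apply der_expneg.
        + intros; apply Rmult_comm.
      - simpl. unfold plus, mult, zero; simpl. req. field. exact Hc. }
    exists (- (e / c)), (h z0). intros z Iz. rewrite (const_of_der0 I h HI Hh z0 z I0 Iz). unfold h.
    rewrite Rmult_assoc. rewrite <- exp_plus. replace (- (c * z) + c * z) with 0 by ring. rewrite exp_0. ring.
Qed.

Lemma ext_closure T f g : is_interval T -> cont_on T f -> (forall z, continuous g z) ->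
  (exists z0, interior_pt T z0) -> (forall z, interior_pt T z -> f z = g z) -> forall z, T z -> f z = g z.
Proof.
  intros HI Hf Hg [z0 Hz0] Heq z Tz.
  apply NNPP. intros Hne.
  set (eps := Rabs (f z - g z) / 2).
  assert (Heps : 0 < eps) by (unfold eps; assert (0 < Rabs (f z - g z)) by (apply Rabs_pos_lt; lra); lra).
  destruct (Hf z Tz eps Heps) as [d1 [Hd1 Hd1']].
  destruct (cont_eps g z (Hg z) eps Heps) as [d2 [Hd2 Hd2']].
  assert (T0 : T z0) by (apply interior_T; auto).
  assert (Hm : 0 < Rmin (Rmin d1 d2) (Rabs (z0 - z))).
  { repeat apply Rmin_pos; try lra. apply Rabs_pos_lt. intros E. apply Hne. apply Heq.
    replace z with z0 by lra. exact Hz0. }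
  pose proof (Rmin_l (Rmin d1 d2) (Rabs (z0 - z))). pose proof (Rmin_r (Rmin d1 d2) (Rabs (z0 - z))).
  pose proof (Rmin_l d1 d2). pose proof (Rmin_r d1 d2).
  set (m := Rmin (Rmin d1 d2) (Rabs (z0 - z))) in *.
  assert (exists t, interior_pt T t /\ Rabs (t - z) < m).
  { destruct (Rlt_dec z z0).
    - exists (z + m/2). rewrite Rabs_pos_eq in H0 by lra. split.
      + exists z, z0. repeat split; auto; lra.
      + replace (z + m/2 - z) with (m/2) by ring. rewrite Rabs_pos_eq; lra.
    - assert (z0 < z) by (destruct (Req_dec z z0); [subst; exfalso; apply Hne; apply Heq; auto | lra]).
      exists (z - m/2). rewrite Rabs_left in H0 by lra. split.
      + exists z0, z. repeat split; auto; lra.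
      + replace (z - m/2 - z) with (-(m/2)) by ring. rewrite Rabs_Ropp, Rabs_pos_eq; lra. }
  destruct H3 as [t [Ht Htz]].
  assert (A := Hd1' t (interior_T T t HI Ht) ltac:(lra)).
  assert (B := Hd2' t ltac:(lra)).
  rewrite (Heq t Ht) in A.
  assert (Rabs (f z - g z) <= Rabs (g t - f z) + Rabs (g t - g z)).
  { replace (f z - g z) with (-(g t - f z) + (g t - g z)) by ring.
    eapply Rle_trans. apply Rabs_triang. rewrite Rabs_Ropp. lra. }
  unfold eps in *. lra.
Qed.


Definition G (x y : R -> R) s t := x s * y s + x t * y t - 2 * x s * y t.
Definition Ginv (T : R -> Prop) (x y : R -> R) := forall s t h, T s -> T t -> T (s+h) -> T (t+h) -> s <= t ->
  G x y s t = G x y (s+h) (t+h).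

Lemma phi_Ginv T x y phi : phi_eq T x y phi -> Ginv T x y.
Proof.
  intros H s t h Ts Tt Tsh Tth Hst. destruct (Req_dec s t) as [E|E].
  - subst. unfold G. ring.
  - unfold G. rewrite (H s t), (H (s+h) (t+h)); auto; try lra. f_equal. ring.
Qed.

Lemma Kgen T x y a b c d h : Ginv T x y -> T a -> T b -> T c -> T d -> T (a+h) -> T (b+h) -> T (c+h) -> T (d+h) ->
  a <= c -> a <= d -> b <= c -> b <= d ->
  (x b - x a) * (y c - y d) = (x (b+h) - x (a+h)) * (y (c+h) - y (d+h)).
Proof.
  intros HG Ta Tb Tc Td Tah Tbh Tch Tdh H1 H2 H3 H4.
  assert (E : forall u v w z, 2 * ((x v - x u) * (y w - y z)) = G x y u w - G x y u z - G x y v w + G x y v z).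
  { intros. unfold G. ring. }
  apply (Rmult_eq_reg_l 2); [|lra]. rewrite !E.
  rewrite (HG a c h), (HG a d h), (HG b c h), (HG b d h); auto.
Qed.

Lemma interior_interval T : is_interval T -> is_interval (interior_pt T).
Proof.
  intros HI a b c [r1 [s1 [R1 [S1 [H1 H2]]]]] [r2 [s2 [R2 [S2 [H3 H4]]]]] Hab Hbc.
  exists r1, s2. repeat split; auto; lra.
Qed.

Lemma interior_open T : openI (interior_pt T).
Proof.
  intros z [r [s [Hr [Hs [H1 H2]]]]]. exists (Rmin (z - r) (s - z)). split.
  - apply Rmin_pos; lra.
  - intros z' Hz'. pose proof (Rmin_l (z - r) (s - z)). pose proof (Rmin_r (z - r) (s - z)).
    apply Rabs_def2 in Hz'. exists r, s. repeat split; auto; lra.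
Qed.

Lemma cont_on_sub (T J : R -> Prop) f : (forall t, J t -> T t) -> cont_on T f -> cont_on J f.
Proof.
  intros HJ Hc t Jt eps He. destruct (Hc t (HJ t Jt) eps He) as [d [Hd H]].
  exists d. split; auto.
Qed.

Lemma exp_ne1 a : a <> 0 -> exp a <> 1.
Proof. intros H E. apply H. rewrite <- exp_0 in E. apply exp_inv in E. exact E. Qed.

Lemma DA (J : R -> Prop) (f : R -> R) : is_interval J -> cont_on J f -> (exists z0, interior_pt J z0) ->
  (forall s t h, J s -> J t -> J (s+h) -> J (t+h) -> f (t+h) - f (s+h) = f t - f s) ->
  exists a b, forall t, J t -> f t = a + b * t.
Proof.
  intros HI Hc Hz Hd.
  assert (Ic : forall z, interior_pt J z -> continuous f z) by (intros; eapply interior_cont; eauto).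
  assert (HJ : forall z, interior_pt J z -> J z) by (intros; apply interior_T; auto).
  destruct (CL (interior_pt J) f (interior_open J) Ic) as [c [e He]].
  { intros z1 z2 z3 w I1 I2 I3 I1w I2w I3w.
    rewrite (Hd z2 z3 w), (Hd z2 z1 w); auto. }
  destruct (ODE (interior_pt J) f c e (interior_interval J HI) He) as [[Hc0 [A [B HF]]] | [_ [A [B HF]]]].
  - destruct Hz as [z0 Hz0]. assert (Hz0' := Hz0).
    destruct Hz0' as [r [s [Hr [Hs [H1 H2]]]]].
    set (l := Rmin (z0 - r) (s - z0) / 2).
    assert (Hl : 0 < l /\ l < z0 - r /\ l < s - z0).
    { unfold l. pose proof (Rmin_l (z0 - r) (s - z0)). pose proof (Rmin_r (z0 - r) (s - z0)).
      assert (0 < Rmin (z0 - r) (s - z0)) by (apply Rmin_pos; lra). lra. }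
    assert (Im : interior_pt J (z0 - l)) by (exists r, s; repeat split; auto; lra).
    assert (Ip : interior_pt J (z0 + l)) by (exists r, s; repeat split; auto; lra).
    assert (E := Hd (z0 - l) z0 l (HJ _ Im) (HJ _ Hz0)).
    replace (z0 - l + l) with z0 in E by ring.
    specialize (E (HJ _ Hz0) (HJ _ Ip)).
    rewrite (HF _ Ip), (HF _ Hz0), (HF _ Im) in E.
    assert (EB : B = 0).
    { rewrite Rmult_plus_distr_l in E. rewrite Rmult_minus_distr_l in E. rewrite !exp_plus in E.
      unfold Rminus in E. rewrite exp_plus, exp_Ropp in E.
      assert (Q := exp_ne1 (c * l) ltac:(intro; apply Hc0; destruct (Rmult_integral _ _ H); lra)).
      assert (P1 := exp_pos (c * z0)). assert (P2 := exp_pos (c * l)).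
      set (q := exp (c * l)) in *. set (p := exp (c * z0)) in *.
      assert (E' : B * p * (q - 1) * (q - 1) = 0).
      { apply (Rmult_eq_reg_r (/q)); [|apply Rinv_neq_0_compat; lra].
        rewrite Rmult_0_l. replace (B * p * (q - 1) * (q - 1) * / q) with (B * p * q - B * p - (B * p - B * p * /q)) by (field; lra).
        try rewrite exp_Ropp in E. fold q in E. lra. }
      destruct (Rmult_integral _ _ E') as [E1|E1]; [|lra].
      destruct (Rmult_integral _ _ E1) as [E2|E2]; [|lra].
      destruct (Rmult_integral _ _ E2) as [E3|E3]; lra. }
    exists A, 0. intros t Jt.
    apply (ext_closure J f (fun t => A + 0 * t) HI Hc); auto.
    + intros z. apply (continuous_plus (fun _ => A) (fun t => 0 * t)). apply continuous_const.
      apply (continuous_mult (fun _ => 0) (fun t => t)). apply continuous_const. apply continuous_id.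
    + exists z0; auto.
    + intros z Iz. rewrite (HF z Iz), EB. ring.
  - exists A, B. intros t Jt.
    apply (ext_closure J f (fun t => A + B * t) HI Hc); auto.
    + intros z. apply (continuous_plus (fun _ => A) (fun t => B * t)). apply continuous_const.
      apply (continuous_mult (fun _ => B) (fun t => t)). apply continuous_const. apply continuous_id.
Qed.


Section Main.
Variables (T : R -> Prop) (x y : R -> R).
Hypothesis HI : is_interval T.
Hypothesis Hxm : nondecr_on T x.
Hypothesis Hym : nonincr_on T y.
Hypothesis Hxc : cont_on T x.
Hypothesis Hyc : cont_on T y.
Hypothesis Hpos : forall t, interior_pt T t -> 0 < x t /\ 0 < y t.
Hypothesis HG : Ginv T x y.

Lemma ex_interior : (exists s t, T s /\ T t /\ s < t) -> exists z, interior_pt T z.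
Proof. intros [s [t [Ts [Tt H]]]]. exists ((s+t)/2), s, t. repeat split; auto; lra. Qed.

Lemma nonconst_two f : ~ const_on T f -> exists s t, T s /\ T t /\ s < t /\ f s <> f t.
Proof.
  intros H. apply NNPP. intros H'. apply H. intros s t Ts Tt.
  destruct (Rtotal_order s t) as [E|[E|E]].
  - apply NNPP; intro; apply H'; exists s, t; auto.
  - subst; auto.
  - symmetry. apply NNPP; intro; apply H'; exists t, s; auto.
Qed.

Lemma slope_neg a b : (forall t, T t -> y t = a + b * t) -> ~ const_on T y -> b < 0.
Proof.
  intros Hy Hn. destruct (nonconst_two y Hn) as [s [t [Ts [Tt [Hst Hne]]]]].
  assert (H := Hym s t Ts Tt ltac:(lra)). rewrite (Hy s Ts), (Hy t Tt) in *.
  destruct (Rtotal_order b 0) as [E|[E|E]]; auto.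
  - subst. exfalso. apply Hne. ring.
  - nra.
Qed.

Lemma slope_pos a b : (forall t, T t -> x t = a + b * t) -> ~ const_on T x -> 0 < b.
Proof.
  intros Hx Hn. destruct (nonconst_two x Hn) as [s [t [Ts [Tt [Hst Hne]]]]].
  assert (H := Hxm s t Ts Tt ltac:(lra)). rewrite (Hx s Ts), (Hx t Tt) in *.
  destruct (Rtotal_order b 0) as [E|[E|E]]; auto.
  - nra.
  - subst. exfalso. apply Hne. ring.
Qed.

Lemma case_xconst : const_on T x -> ~ const_on T y ->
  exists a b c, 0 < a /\ 0 < c /\ (forall t, T t -> x t = a /\ y t = b - c * t) /\
   (forall s t, T s -> T t -> s < t -> G x y s t = a * c * (t - s)).
Proof.
  intros Hx Hy.
  destruct (nonconst_two y Hy) as [s0 [t0 [Ts0 [Tt0 [Hst0 _]]]]].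
  destruct (ex_interior ltac:(exists s0, t0; auto)) as [z0 Hz0].
  set (a := x z0).
  assert (Ha : 0 < a) by (apply Hpos; auto).
  assert (Tz0 : T z0) by (apply interior_T; auto).
  assert (Xa : forall t, T t -> x t = a) by (intros t Tt; apply Hx; auto).
  assert (Gf : forall s t, T s -> T t -> G x y s t = a * (y s - y t)).
  { intros s t Ts Tt. unfold G. rewrite (Xa s Ts), (Xa t Tt). ring. }
  assert (Hd : forall s t h, T s -> T t -> T (s+h) -> T (t+h) -> y (t+h) - y (s+h) = y t - y s).
  { intros s t h Ts Tt Tsh Tth.
    destruct (Rle_dec s t).
    - assert (E := HG s t h Ts Tt Tsh Tth r). rewrite !Gf in E by auto.
      apply (Rmult_eq_reg_l a); [|lra]. lra.
    - assert (E := HG t s h Tt Ts Tth Tsh ltac:(lra)). rewrite !Gf in E by auto.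
      apply (Rmult_eq_reg_l a); [|lra]. lra. }
  destruct (DA T y HI Hyc (ex_intro _ z0 Hz0) Hd) as [al [be Hab]].
  assert (Hb := slope_neg al be Hab Hy).
  exists a, al, (-be). split; [lra|]. split; [lra|]. split.
  - intros t Tt. rewrite (Hab t Tt). split; [apply Xa; auto|ring].
  - intros s t Ts Tt Hst. rewrite Gf by auto. rewrite (Hab s Ts), (Hab t Tt). ring.
Qed.

Lemma case_yconst : const_on T y -> ~ const_on T x ->
  exists a b c, 0 < a /\ 0 < c /\ (forall t, T t -> x t = b + c * t /\ y t = a) /\
   (forall s t, T s -> T t -> s < t -> G x y s t = a * c * (t - s)).
Proof.
  intros Hy Hx.
  destruct (nonconst_two x Hx) as [s0 [t0 [Ts0 [Tt0 [Hst0 _]]]]].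
  destruct (ex_interior ltac:(exists s0, t0; auto)) as [z0 Hz0].
  set (a := y z0).
  assert (Ha : 0 < a) by (apply Hpos; auto).
  assert (Tz0 : T z0) by (apply interior_T; auto).
  assert (Ya : forall t, T t -> y t = a) by (intros t Tt; apply Hy; auto).
  assert (Gf : forall s t, T s -> T t -> G x y s t = a * (x t - x s)).
  { intros s t Ts Tt. unfold G. rewrite (Ya s Ts), (Ya t Tt). ring. }
  assert (Hd : forall s t h, T s -> T t -> T (s+h) -> T (t+h) -> x (t+h) - x (s+h) = x t - x s).
  { intros s t h Ts Tt Tsh Tth.
    destruct (Rle_dec s t).
    - assert (E := HG s t h Ts Tt Tsh Tth r). rewrite !Gf in E by auto.
      apply (Rmult_eq_reg_l a); [|lra]. lra.
    - assert (E := HG t s h Tt Ts Tth Tsh ltac:(lra)). rewrite !Gf in E by auto.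
      apply (Rmult_eq_reg_l a); [|lra]. lra. }
  destruct (DA T x HI Hxc (ex_intro _ z0 Hz0) Hd) as [al [be Hab]].
  assert (Hb := slope_pos al be Hab Hx).
  exists a, al, be. split; [lra|]. split; [lra|]. split.
  - intros t Tt. rewrite (Hab t Tt). split; [ring|apply Ya; auto].
  - intros s t Ts Tt Hst. rewrite Gf by auto. rewrite (Hab s Ts), (Hab t Tt). ring.
Qed.

End Main.


Lemma lub_approx E m : is_lub E m -> forall t, t < m -> exists e, E e /\ t < e.
Proof.
  intros [Hu Hl] t Ht. apply NNPP. intros H. assert (m <= t); [|lra].
  apply Hl. intros e He. apply Rnot_lt_le. intros C. apply H. exists e; auto.
Qed.

Section Main.
Variables (T : R -> Prop) (x y : R -> R).
Hypothesis HI : is_interval T.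
Hypothesis Hxm : nondecr_on T x.
Hypothesis Hym : nonincr_on T y.
Hypothesis Hxc : cont_on T x.
Hypothesis Hyc : cont_on T y.
Hypothesis Hpos : forall t, interior_pt T t -> 0 < x t /\ 0 < y t.
Hypothesis HG : Ginv T x y.

Definition Xinc t := exists a, T a /\ a < t /\ x a < x t.
Definition Yd t := exists d, T d /\ t < d /\ y d < y t.

Lemma Xinc_up t t' : Xinc t -> T t' -> t <= t' -> Xinc t'.
Proof.
  intros [a [Ta [H1 H2]]] Tt' H. exists a. repeat split; auto; try lra.
  assert (T t) by (apply (HI a t t' Ta Tt'); lra).
  assert (x t <= x t') by (apply Hxm; auto). lra.
Qed.

Lemma Yd_down t t' : Yd t -> T t' -> t' <= t -> Yd t'.
Proof.
  intros [d [Td [H1 H2]]] Tt' H. exists d. repeat split; auto; try lra.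
  assert (T t) by (apply (HI t' t d Tt' Td); lra).
  assert (y t <= y t') by (apply Hym; auto). lra.
Qed.

Lemma Xinc_open t : T t -> Xinc t -> exists e, 0 < e /\ forall t', T t' -> t - e < t' -> Xinc t'.
Proof.
  intros Tt [a [Ta [H1 H2]]].
  destruct (Hxc t Tt (x t - x a) ltac:(lra)) as [d [Hd Hd']].
  exists (Rmin d (t - a)). split. apply Rmin_pos; lra.
  pose proof (Rmin_l d (t - a)). pose proof (Rmin_r d (t - a)).
  intros t' Tt' Ht'. destruct (Rle_dec t t').
  - apply (Xinc_up t); auto. exists a; auto.
  - exists a. repeat split; auto; try lra.
    assert (Rabs (x t' - x t) < x t - x a) by (apply Hd'; auto; rewrite Rabs_left; lra).
    apply Rabs_def2 in H3. lra.
Qed.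

Lemma Yd_open t : T t -> Yd t -> exists e, 0 < e /\ forall t', T t' -> t' < t + e -> Yd t'.
Proof.
  intros Tt [d [Td [H1 H2]]].
  destruct (Hyc t Tt (y t - y d) ltac:(lra)) as [e [He He']].
  exists (Rmin e (d - t)). split. apply Rmin_pos; lra.
  pose proof (Rmin_l e (d - t)). pose proof (Rmin_r e (d - t)).
  intros t' Tt' Ht'. destruct (Rle_dec t' t).
  - apply (Yd_down t); auto. exists d; auto.
  - exists d. repeat split; auto; try lra.
    assert (Rabs (y t' - y t) < y t - y d) by (apply He'; auto; rewrite Rabs_pos_eq; lra).
    apply Rabs_def2 in H3. lra.
Qed.

Lemma notXinc t : T t -> ~ Xinc t -> forall a, T a -> a <= t -> x a = x t.
Proof.
  intros Tt Hn a Ta H. assert (x a <= x t) by (apply Hxm; auto).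
  destruct (Rle_lt_or_eq_dec _ _ H0); auto. exfalso. apply Hn. exists a. repeat split; auto.
  destruct (Rle_lt_or_eq_dec _ _ H); auto. subst. lra.
Qed.

Lemma notYd t : T t -> ~ Yd t -> forall d, T d -> t <= d -> y d = y t.
Proof.
  intros Tt Hn d Td H. assert (y d <= y t) by (apply Hym; auto).
  destruct (Rle_lt_or_eq_dec _ _ H0); auto. exfalso. apply Hn. exists d. repeat split; auto.
  destruct (Rle_lt_or_eq_dec _ _ H); auto. subst. lra.
Qed.

Lemma Xinc_of_nonconst : ~ const_on T x -> exists t, T t /\ Xinc t.
Proof.
  intros H. destruct (nonconst_two T x H) as [s [t [Ts [Tt [Hst Hne]]]]].
  exists t. split; auto. exists s. repeat split; auto.
  assert (x s <= x t) by (apply Hxm; auto; lra). lra.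
Qed.

Lemma Yd_of_nonconst : ~ const_on T y -> exists t, T t /\ Yd t.
Proof.
  intros H. destruct (nonconst_two T y H) as [s [t [Ts [Tt [Hst Hne]]]]].
  exists s. split; auto. exists t. repeat split; auto.
  assert (y t <= y s) by (apply Hym; auto; lra). lra.
Qed.

End Main.


Section Main.
Variables (T : R -> Prop) (x y : R -> R).
Hypothesis HI : is_interval T.
Hypothesis Hxm : nondecr_on T x.
Hypothesis Hym : nonincr_on T y.
Hypothesis Hxc : cont_on T x.
Hypothesis Hyc : cont_on T y.
Hypothesis Hpos : forall t, interior_pt T t -> 0 < x t /\ 0 < y t.
Hypothesis HG : Ginv T x y.

Lemma caseA3 : ~ const_on T x -> ~ const_on T y -> (forall t, T t -> ~ (Xinc T x t /\ Yd T y t)) ->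
  exists s a b c d, interior_pt T s /\ 0 < a /\ 0 < b /\ 0 < c /\ 0 < d /\ a * c = b * d /\
   (forall t, T t -> x t = a + (if Rlt_dec s t then d * (t - s) else 0) /\
                     y t = b - (if Rle_dec t s then c * (t - s) else 0)) /\
   (forall s' t', T s' -> T t' -> s' < t' -> G x y s' t' = a * c * (t' - s')).
Proof.
  intros Hnx Hny HA.
  destruct (Xinc_of_nonconst T x Hxm Hnx) as [t1 [Tt1 X1]].
  destruct (Yd_of_nonconst T y Hym Hny) as [t2 [Tt2 Y2]].
  set (E := fun t => T t /\ Yd T y t).
  assert (Hub : is_upper_bound E t1).
  { intros t [Tt Yt]. apply Rnot_lt_le. intros C. apply (HA t Tt). split; auto.
    apply (Xinc_up T x HI Hxm t1); auto. lra. }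
  destruct (completeness E ltac:(exists t1; exact Hub) ltac:(exists t2; split; auto)) as [s Hs].
  assert (Hs1 : s <= t1) by (apply Hs; exact Hub).
  assert (Hs2 : t2 <= s) by (apply Hs; split; auto).
  assert (Ts : T s) by (apply (HI t2 s t1); auto).
  assert (nYs : ~ Yd T y s).
  { intros Ys. destruct (Yd_open T y HI Hym Hyc s Ts Ys) as [e [He He']].
    assert (s < t1).
    { destruct (Rle_lt_or_eq_dec _ _ Hs1); auto. subst. exfalso. apply (HA t1 Tt1); auto. }
    set (t' := s + Rmin e (t1 - s) / 2).
    pose proof (Rmin_l e (t1 - s)). pose proof (Rmin_r e (t1 - s)).
    assert (0 < Rmin e (t1 - s)) by (apply Rmin_pos; lra).
    assert (Tt' : T t') by (apply (HI s t' t1); auto; unfold t'; lra).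
    assert (E t') by (split; auto; apply He'; auto; unfold t'; lra).
    assert (t' <= s) by (apply Hs; auto). unfold t' in *; lra. }
  assert (Ybelow : forall t, T t -> t < s -> Yd T y t).
  { intros t Tt Hts. destruct (lub_approx E s Hs t Hts) as [e [[Te Ye] He]].
    apply (Yd_down T y HI Hym e); auto. lra. }
  assert (nXs : ~ Xinc T x s).
  { intros Xs. destruct (Xinc_open T x HI Hxm Hxc s Ts Xs) as [e [He He']].
    assert (t2 < s).
    { destruct (Rle_lt_or_eq_dec _ _ Hs2); auto. subst. exfalso. auto. }
    set (t' := s - Rmin e (s - t2) / 2).
    pose proof (Rmin_l e (s - t2)). pose proof (Rmin_r e (s - t2)).
    assert (0 < Rmin e (s - t2)) by (apply Rmin_pos; lra).
    assert (Tt' : T t') by (apply (HI t2 t' s); auto; unfold t'; lra).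
    apply (HA t' Tt'). split.
    - apply He'; auto. unfold t'; lra.
    - apply Ybelow; auto. unfold t'; lra. }
  assert (Hst2 : t2 < s) by (destruct (Rle_lt_or_eq_dec _ _ Hs2); auto; subst; exfalso; auto).
  assert (Hst1 : s < t1) by (destruct (Rle_lt_or_eq_dec _ _ Hs1); auto; subst; exfalso; auto).
  assert (Is : interior_pt T s) by (exists t2, t1; auto).
  set (a := x s). set (b := y s).
  assert (Ha : 0 < a) by (apply Hpos; auto).
  assert (Hb : 0 < b) by (apply Hpos; auto).
  assert (XL : forall t, T t -> t <= s -> x t = a) by (intros; apply (notXinc T x Hxm s); auto).
  assert (YR : forall t, T t -> s <= t -> y t = b) by (intros; apply (notYd T y Hym s); auto).
  set (L := fun t => T t /\ t <= s).
  assert (HIL : is_interval L).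
  { intros p q r [Tp Hp] [Tr Hr] H1 H2. split; [apply (HI p q r)|]; auto; lra. }
  assert (GL : forall p q, L p -> L q -> G x y p q = a * (y p - y q)).
  { intros p q [Tp Hp] [Tq Hq]. unfold G. rewrite (XL p), (XL q); auto. ring. }
  destruct (DA L y HIL (cont_on_sub T L y (fun t H => proj1 H) Hyc)) as [al [be Hab]].
  { exists ((t2 + s)/2), t2, s. repeat split; unfold L; auto; lra. }
  { intros p q h Lp Lq Lph Lqh. destruct (Rle_dec p q).
    - assert (E0 := HG p q h (proj1 Lp) (proj1 Lq) (proj1 Lph) (proj1 Lqh) r). rewrite !GL in E0 by auto.
      apply (Rmult_eq_reg_l a); [|lra]. lra.
    - assert (E0 := HG q p h (proj1 Lq) (proj1 Lp) (proj1 Lqh) (proj1 Lph) ltac:(lra)). rewrite !GL in E0 by auto.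
      apply (Rmult_eq_reg_l a); [|lra]. lra. }
  set (R0 := fun t => T t /\ s <= t).
  assert (HIR : is_interval R0).
  { intros p q r [Tp Hp] [Tr Hr] H1 H2. split; [apply (HI p q r)|]; auto; lra. }
  assert (GR : forall p q, R0 p -> R0 q -> G x y p q = b * (x q - x p)).
  { intros p q [Tp Hp] [Tq Hq]. unfold G. rewrite (YR p), (YR q); auto. ring. }
  destruct (DA R0 x HIR (cont_on_sub T R0 x (fun t H => proj1 H) Hxc)) as [al' [be' Hab']].
  { exists ((s + t1)/2), s, t1. repeat split; unfold R0; auto; lra. }
  { intros p q h Lp Lq Lph Lqh. destruct (Rle_dec p q).
    - assert (E0 := HG p q h (proj1 Lp) (proj1 Lq) (proj1 Lph) (proj1 Lqh) r). rewrite !GR in E0 by auto.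
      apply (Rmult_eq_reg_l b); [|lra]. lra.
    - assert (E0 := HG q p h (proj1 Lq) (proj1 Lp) (proj1 Lqh) (proj1 Lph) ltac:(lra)). rewrite !GR in E0 by auto.
      apply (Rmult_eq_reg_l b); [|lra]. lra. }
  assert (Lt2 : L t2) by (split; auto; lra). assert (Ls : L s) by (split; auto; lra).
  assert (Rt1 : R0 t1) by (split; auto; lra). assert (Rs : R0 s) by (split; auto; lra).
  assert (Yt2 : b < y t2).
  { destruct Y2 as [d [Td [H1 H2]]]. destruct (Rle_dec s d).
    - rewrite (YR d) in H2; auto.
    - assert (y s <= y d) by (apply Hym; auto; lra). unfold b; lra. }
  assert (Xt1 : a < x t1).
  { destruct X1 as [d [Td [H1 H2]]]. destruct (Rle_dec d s).
    - rewrite (XL d) in H2; auto.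
    - assert (x s <= x d) by (apply Hxm; auto; lra). unfold a; lra. }
  assert (Ebs : b = al + be * s) by (unfold b; apply Hab; auto).
  assert (Eas : a = al' + be' * s) by (unfold a; apply Hab'; auto).
  assert (Hbe : be < 0) by (rewrite (Hab t2 Lt2) in Yt2; nra).
  assert (Hbe' : 0 < be') by (rewrite (Hab' t1 Rt1) in Xt1; nra).
  assert (Hform : forall t, T t -> x t = a + (if Rlt_dec s t then be' * (t - s) else 0) /\
                     y t = b - (if Rle_dec t s then (-be) * (t - s) else 0)).
  { intros t Tt. split.
    - destruct (Rlt_dec s t).
      + rewrite (Hab' t) by (split; auto; lra). rewrite Eas. ring.
      + rewrite XL by (auto; lra). ring.
    - destruct (Rle_dec t s).
      + rewrite (Hab t) by (split; auto; lra). rewrite Ebs. ring.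
      + rewrite YR by (auto; lra). ring. }
  set (h := Rmin (s - t2) ((t1 - s) / 2)).
  pose proof (Rmin_l (s - t2) ((t1 - s) / 2)). pose proof (Rmin_r (s - t2) ((t1 - s) / 2)).
  assert (Hh : 0 < h) by (apply Rmin_pos; lra).
  assert (Hacbd : a * (-be) = b * be').
  { assert (T1 : T (s - h)) by (apply (HI t2 (s-h) t1); auto; unfold h in *; lra).
    assert (T2 : T (s + h)) by (apply (HI t2 (s+h) t1); auto; unfold h in *; lra).
    assert (T3 : T (s + 2 * h)) by (apply (HI t2 (s+2*h) t1); auto; unfold h in *; lra).
    assert (E0 := HG (s - h) (s + h) h T1 T2 ltac:(replace (s - h + h) with s by ring; auto)
                   ltac:(replace (s + h + h) with (s + 2 * h) by ring; auto) ltac:(lra)).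
    replace (s - h + h) with s in E0 by ring. replace (s + h + h) with (s + 2 * h) in E0 by ring.
    unfold G in E0.
    destruct (Hform (s - h) T1) as [F1 F2]. destruct (Hform (s + h) T2) as [F3 F4].
    destruct (Hform s Ts) as [F5 F6]. destruct (Hform (s + 2*h) T3) as [F7 F8].
    rewrite F1, F2, F3, F4, F5, F6, F7, F8 in E0.
    destruct (Rlt_dec s (s - h)); [lra|]. destruct (Rle_dec (s - h) s); [|lra].
    destruct (Rlt_dec s (s + h)); [|lra]. destruct (Rle_dec (s + h) s); [lra|].
    destruct (Rlt_dec s s); [lra|]. destruct (Rle_dec s s); [|lra].
    destruct (Rlt_dec s (s + 2*h)); [|lra]. destruct (Rle_dec (s + 2*h) s); [lra|].
    apply (Rmult_eq_reg_r h); [|lra]. nra. }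
  exists s, a, b, (-be), be'. split; [auto|]. split; [lra|]. split; [lra|]. split; [lra|]. split; [lra|].
  split; [lra|]. split.
  - intros t Tt. apply Hform; auto.
  - intros s' t' Ts' Tt' Hst. unfold G.
    destruct (Hform s' Ts') as [F1 F2]. destruct (Hform t' Tt') as [F3 F4].
    rewrite F1, F2, F3, F4.
    destruct (Rlt_dec s s'); destruct (Rle_dec s' s); destruct (Rlt_dec s t'); destruct (Rle_dec t' s);
      try lra; nra.
Qed.

End Main.


Lemma max3_in (P : R -> Prop) a b c : P a -> P b -> P c -> P (Rmax (Rmax a b) c).
Proof. intros. unfold Rmax. destruct (Rle_dec a b); destruct (Rle_dec _ c); auto. Qed.
Lemma min3_in (P : R -> Prop) a b c : P a -> P b -> P c -> P (Rmin (Rmin a b) c).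
Proof. intros. unfold Rmin. destruct (Rle_dec a b); destruct (Rle_dec _ c); auto. Qed.
Lemma max3_ge a b c : a <= Rmax (Rmax a b) c /\ b <= Rmax (Rmax a b) c /\ c <= Rmax (Rmax a b) c.
Proof. unfold Rmax. destruct (Rle_dec a b); destruct (Rle_dec _ c); lra. Qed.
Lemma min3_le a b c : Rmin (Rmin a b) c <= a /\ Rmin (Rmin a b) c <= b /\ Rmin (Rmin a b) c <= c.
Proof. unfold Rmin. destruct (Rle_dec a b); destruct (Rle_dec _ c); lra. Qed.

Lemma cross_alg X1 X1' X3 X3' Y Y' : X1 * Y = X1' * Y' -> X3 * Y = X3' * Y' -> (Y <> 0 \/ Y' <> 0) ->
  X3' * X1 = X3 * X1'.
Proof.
  intros E1 E3 [HY|HY].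
  - apply (Rmult_eq_reg_r Y); auto.
    transitivity (X3' * (X1 * Y)). ring. rewrite E1.
    transitivity (X1' * (X3' * Y')). ring. rewrite <- E3. ring.
  - apply (Rmult_eq_reg_r Y'); auto.
    transitivity (X1 * (X3' * Y')). ring. rewrite <- E3.
    transitivity (X3 * (X1 * Y)). ring. rewrite E1. ring.
Qed.

Section Main.
Variables (T : R -> Prop) (x y : R -> R).
Hypothesis HI : is_interval T.
Hypothesis Hxm : nondecr_on T x.
Hypothesis Hym : nonincr_on T y.
Hypothesis Hxc : cont_on T x.
Hypothesis Hyc : cont_on T y.
Hypothesis HG : Ginv T x y.
Variable t0 : R.
Hypothesis Tt0 : T t0.
Hypothesis X0 : Xinc T x t0.
Hypothesis Y0 : Yd T y t0.

Lemma allYd t : interior_pt T t -> Yd T y t.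
Proof.
  intros It. apply NNPP. intros nY.
  assert (Tt : T t) by (apply interior_T; auto).
  set (E := fun z => T z /\ Xinc T x z /\ Yd T y z).
  assert (Hub : is_upper_bound E t).
  { intros z [Tz [_ Yz]]. apply Rnot_lt_le. intros C. apply nY. apply (Yd_down T y HI Hym z); auto. lra. }
  destruct (completeness E ltac:(exists t; exact Hub) ltac:(exists t0; split; auto)) as [rho Hr].
  assert (H1 : t0 <= rho) by (apply Hr; split; auto).
  assert (H2 : rho <= t) by (apply Hr; exact Hub).
  assert (Tr : T rho) by (apply (HI t0 rho t); auto).
  assert (Ht0t : t0 < t) by (destruct (Rle_lt_or_eq_dec t0 t) as [|e]; [apply Hub; split; auto | auto | subst; contradiction]).
  assert (Hrt0 : t0 < rho).
  { destruct (Yd_open T y HI Hym Hyc t0 Tt0 Y0) as [e [He He']].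
    set (t' := t0 + Rmin e (t - t0) / 2).
    pose proof (Rmin_l e (t - t0)). pose proof (Rmin_r e (t - t0)).
    assert (0 < Rmin e (t - t0)) by (apply Rmin_pos; lra).
    assert (Tt' : T t') by (apply (HI t0 t' t); auto; unfold t'; lra).
    assert (E t').
    { split; auto. split. apply (Xinc_up T x HI Hxm t0); auto; unfold t'; lra. apply He'; auto. unfold t'; lra. }
    assert (t' <= rho) by (apply Hr; auto). unfold t' in *; lra. }
  assert (nYr : ~ Yd T y rho).
  { intros Yr. destruct (Yd_open T y HI Hym Hyc rho Tr Yr) as [e [He He']].
    assert (rho < t) by (destruct (Rle_lt_or_eq_dec _ _ H2); auto; subst; contradiction).
    set (t' := rho + Rmin e (t - rho) / 2).
    pose proof (Rmin_l e (t - rho)). pose proof (Rmin_r e (t - rho)).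
    assert (0 < Rmin e (t - rho)) by (apply Rmin_pos; lra).
    assert (Tt' : T t') by (apply (HI rho t' t); auto; unfold t'; lra).
    assert (E t').
    { split; auto. split. apply (Xinc_up T x HI Hxm t0); auto; unfold t'; lra. apply He'; auto. unfold t'; lra. }
    assert (t' <= rho) by (apply Hr; auto). unfold t' in *; lra. }
  assert (YR : forall d, T d -> rho <= d -> y d = y rho) by (intros; apply (notYd T y Hym rho); auto).
  destruct It as [r0 [r' [Tr0 [Tr' [_ Htr']]]]].
  set (eps := Rmin (rho - t0) (r' - rho)).
  pose proof (Rmin_l (rho - t0) (r' - rho)). pose proof (Rmin_r (rho - t0) (r' - rho)).
  assert (Heps : 0 < eps) by (apply Rmin_pos; lra).
  assert (Tre : T (rho - eps)) by (apply (HI t0 _ rho); auto; unfold eps in *; lra).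
  assert (Tre' : T (rho + eps)) by (apply (HI rho _ r'); auto; unfold eps in *; lra).
  assert (Ylt : y rho < y (rho - eps)).
  { assert (y rho <= y (rho - eps)) by (apply Hym; auto; lra).
    destruct (Rle_lt_or_eq_dec _ _ H3) as [|Eq]; auto. exfalso.
    destruct (lub_approx E rho Hr (rho - eps) ltac:(lra)) as [z [[Tz [_ [d [Td [Hzd Hyd]]]]] Hz]].
    assert (y z <= y (rho - eps)) by (apply Hym; auto; lra).
    destruct (Rle_dec rho d).
    - rewrite (YR d Td r) in Hyd. lra.
    - assert (y rho <= y d) by (apply Hym; auto; lra). lra. }
  destruct X0 as [a [Ta [Ha1 Ha2]]].
  assert (Tae : T (a + eps)) by (apply (HI a _ rho); auto; unfold eps in *; lra).
  assert (Tte : T (t0 + eps)) by (apply (HI a _ rho); auto; unfold eps in *; lra).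
  assert (K := Kgen T x y a t0 (rho - eps) rho eps HG Ta Tt0 Tre Tr Tae Tte
                 ltac:(replace (rho - eps + eps) with rho by ring; auto) Tre'
                 ltac:(unfold eps in *; lra) ltac:(lra) ltac:(unfold eps in *; lra) ltac:(lra)).
  replace (rho - eps + eps) with rho in K by ring.
  rewrite (YR (rho + eps) Tre' ltac:(lra)) in K.
  assert (0 < (x t0 - x a) * (y (rho - eps) - y rho)) by (apply Rmult_lt_0_compat; lra).
  lra.
Qed.

Lemma allXinc t : interior_pt T t -> Xinc T x t.
Proof.
  intros It. apply NNPP. intros nX.
  assert (Tt : T t) by (apply interior_T; auto).
  set (E := fun z => T (-z) /\ Xinc T x (-z) /\ Yd T y (-z)).
  assert (Hub : is_upper_bound E (-t)).
  { intros z [Tz [Xz _]]. apply Rnot_lt_le. intros C. apply nX. apply (Xinc_up T x HI Hxm (-z)); auto. lra. }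
  destruct (completeness E ltac:(exists (-t); exact Hub) ltac:(exists (-t0); unfold E; rewrite Ropp_involutive; split; auto)) as [mu Hr].
  set (sg := - mu).
  assert (H1 : sg <= t0) by (assert (-t0 <= mu) by (apply Hr; unfold E; rewrite Ropp_involutive; auto); unfold sg; lra).
  assert (H2 : t <= sg) by (assert (mu <= -t) by (apply Hr; exact Hub); unfold sg; lra).
  assert (Tr : T sg) by (apply (HI t sg t0); auto).
  assert (Ht0t : t < t0).
  { destruct (Rle_lt_or_eq_dec t t0) as [|e]; [|auto|subst; contradiction]. lra. }
  assert (Hrt0 : sg < t0).
  { destruct (Xinc_open T x HI Hxm Hxc t0 Tt0 X0) as [e [He He']].
    set (t' := t0 - Rmin e (t0 - t) / 2).
    pose proof (Rmin_l e (t0 - t)). pose proof (Rmin_r e (t0 - t)).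
    assert (0 < Rmin e (t0 - t)) by (apply Rmin_pos; lra).
    assert (Tt' : T t') by (apply (HI t t' t0); auto; unfold t'; lra).
    assert (E (- t')).
    { unfold E. rewrite Ropp_involutive. split; auto. split. apply He'; auto. unfold t'; lra.
      apply (Yd_down T y HI Hym t0); auto; unfold t'; lra. }
    assert (- t' <= mu) by (apply Hr; auto). unfold t' in *; unfold sg in *; lra. }
  assert (nXr : ~ Xinc T x sg).
  { intros Xr. destruct (Xinc_open T x HI Hxm Hxc sg Tr Xr) as [e [He He']].
    assert (t < sg) by (destruct (Rle_lt_or_eq_dec _ _ H2); auto; subst; contradiction).
    set (t' := sg - Rmin e (sg - t) / 2).
    pose proof (Rmin_l e (sg - t)). pose proof (Rmin_r e (sg - t)).
    assert (0 < Rmin e (sg - t)) by (apply Rmin_pos; lra).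
    assert (Tt' : T t') by (apply (HI t t' sg); auto; unfold t'; lra).
    assert (E (-t')).
    { unfold E. rewrite Ropp_involutive. split; auto. split. apply He'; auto. unfold t'; lra.
      apply (Yd_down T y HI Hym t0); auto; unfold t'; lra. }
    assert (- t' <= mu) by (apply Hr; auto). unfold t' in *; unfold sg in *; lra. }
  assert (XL : forall a, T a -> a <= sg -> x a = x sg) by (intros; apply (notXinc T x Hxm sg); auto).
  destruct It as [r' [r0 [Tr' [Tr0 [Htr' _]]]]].
  set (eps := Rmin (t0 - sg) (sg - r')).
  pose proof (Rmin_l (t0 - sg) (sg - r')). pose proof (Rmin_r (t0 - sg) (sg - r')).
  assert (Heps : 0 < eps) by (apply Rmin_pos; lra).
  assert (Tre : T (sg + eps)) by (apply (HI sg _ t0); auto; unfold eps in *; lra).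
  assert (Tre' : T (sg - eps)) by (apply (HI r' _ sg); auto; unfold eps in *; lra).
  assert (Xlt : x sg < x (sg + eps)).
  { assert (x sg <= x (sg + eps)) by (apply Hxm; auto; lra).
    destruct (Rle_lt_or_eq_dec _ _ H3) as [|Eq]; auto. exfalso.
    destruct (lub_approx E mu Hr (- (sg + eps)) ltac:(unfold sg; lra)) as [z [[Tz [[a [Ta [Haz Hxa]]] _]] Hz]].
    assert (x (-z) <= x (sg + eps)) by (apply Hxm; auto; lra).
    destruct (Rle_dec a sg).
    - rewrite (XL a Ta r) in Hxa. lra.
    - assert (x sg <= x a) by (apply Hxm; auto; lra). lra. }
  destruct Y0 as [d [Td [Hd1 Hd2]]].
  assert (Tde : T (d - eps)) by (apply (HI sg _ d); auto; unfold eps in *; lra).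
  assert (Tte : T (t0 - eps)) by (apply (HI sg _ d); auto; unfold eps in *; lra).
  assert (K := Kgen T x y sg (sg + eps) t0 d (- eps) HG Tr Tre Tt0 Td Tre'
                 ltac:(replace (sg + eps + - eps) with sg by ring; auto) Tte Tde
                 ltac:(lra) ltac:(lra) ltac:(unfold eps in *; lra) ltac:(unfold eps in *; lra)).
  replace (sg + eps + - eps) with sg in K by ring.
  replace (sg + - eps) with (sg - eps) in K by ring.
  rewrite (XL (sg - eps) Tre' ltac:(lra)) in K.
  assert (0 < (x (sg + eps) - x sg) * (y t0 - y d)) by (apply Rmult_lt_0_compat; lra).
  lra.
Qed.

End Main.


Definition FormE (T : R -> Prop) (f : R -> R) :=
  (exists A B c, c <> 0 /\ forall z, T z -> f z = A + B * exp (c * z)) \/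
  (exists A B, forall z, T z -> f z = A + B * z).

Lemma form_of T (f : R -> R) : is_interval T -> cont_on T f -> (exists z, interior_pt T z) ->
  (exists c e, forall z, interior_pt T z -> is_derive f z (c * f z + e)) -> FormE T f.
Proof.
  intros HI Hc Hz [c [e Hd]].
  destruct (ODE (interior_pt T) f c e (interior_interval T HI) Hd) as [[Hc0 [A [B HF]]] | [_ [A [B HF]]]].
  - left. exists A, B, c. split; auto. intros z Tz.
    apply (ext_closure T f (fun z => A + B * exp (c * z)) HI Hc); auto.
    intros z'. apply (@ex_derive_continuous R_AbsRing R_NormedModule). auto_derive. auto.
  - right. exists A, B. intros z Tz.
    apply (ext_closure T f (fun z => A + B * z) HI Hc); auto.
    intros z'. apply (@ex_derive_continuous R_AbsRing R_NormedModule). auto_derive. auto.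
Qed.

Section Main.
Variables (T : R -> Prop) (x y : R -> R).
Hypothesis HI : is_interval T.
Hypothesis Hxm : nondecr_on T x.
Hypothesis Hym : nonincr_on T y.
Hypothesis Hxc : cont_on T x.
Hypothesis Hyc : cont_on T y.
Hypothesis HG : Ginv T x y.
Hypothesis AllY : forall t, interior_pt T t -> Yd T y t.
Hypothesis AllX : forall t, interior_pt T t -> Xinc T x t.

Lemma crossX z1 z2 z3 w : interior_pt T z1 -> interior_pt T z2 -> interior_pt T z3 ->
  interior_pt T (z1+w) -> interior_pt T (z2+w) -> interior_pt T (z3+w) ->
  (x (z3+w) - x (z2+w)) * (x z1 - x z2) = (x z3 - x z2) * (x (z1+w) - x (z2+w)).
Proof.
  intros I1 I2 I3 I1w I2w I3w.
  assert (TI : forall z, interior_pt T z -> T z) by (intros; apply interior_T; auto).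
  destruct (Rle_dec 0 w).
  - set (m := Rmax (Rmax (z1+w) (z2+w)) (z3+w)).
    assert (Im : interior_pt T m) by (apply max3_in; auto).
    assert (Tmw : T (m - w)) by (apply (max3_in (fun v => T (v - w))); cbv beta; [replace (z1 + w - w) with z1 by ring | replace (z2+w-w) with z2 by ring | replace (z3+w-w) with z3 by ring]; auto).
    destruct (max3_ge (z1+w) (z2+w) (z3+w)) as [G1 [G2 G3]]. fold m in G1, G2, G3.
    destruct (AllY m Im) as [d [Td [Hmd Hyd]]].
    assert (Tdw : T (d - w)) by (apply (HI (m - w) _ d); auto; lra).
    assert (K1 := Kgen T x y z2 z1 (m - w) (d - w) w HG (TI _ I2) (TI _ I1) Tmw Tdw (TI _ I2w) (TI _ I1w)
       ltac:(replace (m - w + w) with m by ring; auto) ltac:(replace (d - w + w) with d by ring; auto)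
       ltac:(lra) ltac:(lra) ltac:(lra) ltac:(lra)).
    assert (K3 := Kgen T x y z2 z3 (m - w) (d - w) w HG (TI _ I2) (TI _ I3) Tmw Tdw (TI _ I2w) (TI _ I3w)
       ltac:(replace (m - w + w) with m by ring; auto) ltac:(replace (d - w + w) with d by ring; auto)
       ltac:(lra) ltac:(lra) ltac:(lra) ltac:(lra)).
    replace (m - w + w) with m in K1, K3 by ring. replace (d - w + w) with d in K1, K3 by ring.
    apply (cross_alg _ _ _ _ _ _ K1 K3). right. lra.
  - set (m := Rmax (Rmax z1 z2) z3).
    assert (Im : interior_pt T m) by (apply max3_in; auto).
    assert (Tmw : T (m + w)) by (apply (max3_in (fun v => T (v + w))); auto).
    destruct (max3_ge z1 z2 z3) as [G1 [G2 G3]]. fold m in G1, G2, G3.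
    destruct (AllY m Im) as [d [Td [Hmd Hyd]]].
    assert (Tdw : T (d + w)) by (apply (HI (m + w) _ d); auto; lra).
    assert (K1 := Kgen T x y z2 z1 m d w HG (TI _ I2) (TI _ I1) (TI _ Im) Td (TI _ I2w) (TI _ I1w) Tmw Tdw
       ltac:(lra) ltac:(lra) ltac:(lra) ltac:(lra)).
    assert (K3 := Kgen T x y z2 z3 m d w HG (TI _ I2) (TI _ I3) (TI _ Im) Td (TI _ I2w) (TI _ I3w) Tmw Tdw
       ltac:(lra) ltac:(lra) ltac:(lra) ltac:(lra)).
    apply (cross_alg _ _ _ _ _ _ K1 K3). left. lra.
Qed.

Lemma crossY z1 z2 z3 w : interior_pt T z1 -> interior_pt T z2 -> interior_pt T z3 ->
  interior_pt T (z1+w) -> interior_pt T (z2+w) -> interior_pt T (z3+w) ->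
  (y (z3+w) - y (z2+w)) * (y z1 - y z2) = (y z3 - y z2) * (y (z1+w) - y (z2+w)).
Proof.
  intros I1 I2 I3 I1w I2w I3w.
  assert (TI : forall z, interior_pt T z -> T z) by (intros; apply interior_T; auto).
  destruct (Rle_dec 0 w).
  - set (m := Rmin (Rmin z1 z2) z3).
    assert (Im : interior_pt T m) by (apply min3_in; auto).
    assert (Tmw : T (m + w)) by (apply (min3_in (fun v => T (v + w))); auto).
    destruct (min3_le z1 z2 z3) as [G1 [G2 G3]]. fold m in G1, G2, G3.
    destruct (AllX m Im) as [a [Ta [Ham Hxa]]].
    assert (Taw : T (a + w)) by (apply (HI a _ (m + w)); auto; lra).
    assert (K1 := Kgen T x y a m z2 z1 w HG Ta (TI _ Im) (TI _ I2) (TI _ I1) Taw Tmw (TI _ I2w) (TI _ I1w)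
       ltac:(lra) ltac:(lra) ltac:(lra) ltac:(lra)).
    assert (K3 := Kgen T x y a m z2 z3 w HG Ta (TI _ Im) (TI _ I2) (TI _ I3) Taw Tmw (TI _ I2w) (TI _ I3w)
       ltac:(lra) ltac:(lra) ltac:(lra) ltac:(lra)).
    assert (H := cross_alg (y z2 - y z1) (y (z2+w) - y (z1+w)) (y z2 - y z3) (y (z2+w) - y (z3+w))
          (x m - x a) (x (m + w) - x (a + w)) ltac:(rewrite Rmult_comm, K1; ring) ltac:(rewrite Rmult_comm, K3; ring)
          ltac:(left; lra)).
    lra.
  - set (m := Rmin (Rmin (z1+w) (z2+w)) (z3+w)).
    assert (Im : interior_pt T m) by (apply min3_in; auto).
    assert (Tmw : T (m - w)) by (apply (min3_in (fun v => T (v - w))); cbv beta; [replace (z1 + w - w) with z1 by ring | replace (z2+w-w) with z2 by ring | replace (z3+w-w) with z3 by ring]; auto).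
    destruct (min3_le (z1+w) (z2+w) (z3+w)) as [G1 [G2 G3]]. fold m in G1, G2, G3.
    destruct (AllX m Im) as [a [Ta [Ham Hxa]]].
    assert (Taw : T (a - w)) by (apply (HI a _ (m - w)); auto; lra).
    assert (K1 := Kgen T x y (a - w) (m - w) z2 z1 w HG Taw Tmw (TI _ I2) (TI _ I1)
       ltac:(replace (a - w + w) with a by ring; auto) ltac:(replace (m - w + w) with m by ring; auto) (TI _ I2w) (TI _ I1w)
       ltac:(lra) ltac:(lra) ltac:(lra) ltac:(lra)).
    assert (K3 := Kgen T x y (a - w) (m - w) z2 z3 w HG Taw Tmw (TI _ I2) (TI _ I3)
       ltac:(replace (a - w + w) with a by ring; auto) ltac:(replace (m - w + w) with m by ring; auto) (TI _ I2w) (TI _ I3w)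
       ltac:(lra) ltac:(lra) ltac:(lra) ltac:(lra)).
    replace (a - w + w) with a in K1, K3 by ring. replace (m - w + w) with m in K1, K3 by ring.
    assert (H := cross_alg (y z2 - y z1) (y (z2+w) - y (z1+w)) (y z2 - y z3) (y (z2+w) - y (z3+w))
          (x (m - w) - x (a - w)) (x m - x a) ltac:(rewrite Rmult_comm, K1; ring) ltac:(rewrite Rmult_comm, K3; ring)
          ltac:(right; lra)).
    lra.
Qed.

Lemma formX : (exists z, interior_pt T z) -> FormE T x.
Proof.
  intros Hz. apply form_of; auto.
  apply (CL (interior_pt T) x (interior_open T)).
  - intros z Iz. apply (interior_cont T); auto.
  - intros. apply crossX; auto.
Qed.

Lemma formY : (exists z, interior_pt T z) -> FormE T y.
Proof.
  intros Hz. apply form_of; auto.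
  apply (CL (interior_pt T) y (interior_open T)).
  - intros z Iz. apply (interior_cont T); auto.
  - intros. apply crossY; auto.
Qed.

End Main.


Definition Gv (xa ya xb yb : R) := xa*ya + xb*yb - 2*xa*yb.
Lemma Gid A B A' B' u q : u <> 0 -> q <> 0 ->
  Gv (A + B*u) (A' + B'*/u) (A + B*(u*q)) (A' + B'*(/u*/q)) - Gv (A+B*(u*q)) (A'+B'*(/u*/q)) (A+B*(u*q*q)) (A'+B'*(/u*/q*/q))
  = (q-1)^2 * (A*B'/(u*q^2) - B*A'*u).
Proof. intros. unfold Gv. field. auto. Qed.

Lemma exp_step c p l : exp (c * (p + l)) = exp (c * p) * exp (c * l).
Proof. rewrite Rmult_plus_distr_l, exp_plus. reflexivity. Qed.

Lemma expn_step c p l : exp (- (c * (p + l))) = exp (- (c * p)) * / exp (c * l).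
Proof. rewrite Rmult_plus_distr_l, Ropp_plus_distr, exp_plus, (exp_Ropp (c * l)). reflexivity. Qed.

Lemma exp5 c p l : exp (c * (p + 0 * l)) = exp (c * p) /\
  exp (c * (p + 1 * l)) = exp (c * p) * exp (c * l) /\
  exp (c * (p + 2 * l)) = exp (c * p) * exp (c * l) * exp (c * l) /\
  exp (c * (p + 3 * l)) = exp (c * p) * exp (c * l) * exp (c * l) * exp (c * l) /\
  exp (c * (p + 4 * l)) = exp (c * p) * exp (c * l) * exp (c * l) * exp (c * l) * exp (c * l).
Proof.
  replace (p + 0 * l) with p by ring.
  replace (p + 1 * l) with (p + l) by ring.
  replace (p + 2 * l) with (p + l + l) by ring.
  replace (p + 3 * l) with (p + l + l + l) by ring.
  replace (p + 4 * l) with (p + l + l + l + l) by ring.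
  rewrite !exp_step. repeat split; reflexivity.
Qed.

Section Main.
Variables (T : R -> Prop) (x y : R -> R).
Hypothesis HI : is_interval T.
Hypothesis Hxm : nondecr_on T x.
Hypothesis Hym : nonincr_on T y.
Hypothesis Hpos : forall t, interior_pt T t -> 0 < x t /\ 0 < y t.
Hypothesis HG : Ginv T x y.
Hypothesis Hnx : ~ const_on T x.
Hypothesis Hny : ~ const_on T y.

Lemma Bnz_x A B : (forall z, T z -> x z = A + B * z) -> B <> 0.
Proof. intros H E. apply Hnx. intros s t Ts Tt. rewrite (H s Ts), (H t Tt), E. ring. Qed.
Lemma Bnz_y A B : (forall z, T z -> y z = A + B * z) -> B <> 0.
Proof. intros H E. apply Hny. intros s t Ts Tt. rewrite (H s Ts), (H t Tt), E. ring. Qed.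
Lemma Bnz_xe A B c : (forall z, T z -> x z = A + B * exp (c * z)) -> B <> 0.
Proof. intros H E. apply Hnx. intros s t Ts Tt. rewrite (H s Ts), (H t Tt), E. ring. Qed.
Lemma Bnz_ye A B c : (forall z, T z -> y z = A + B * exp (c * z)) -> B <> 0.
Proof. intros H E. apply Hny. intros s t Ts Tt. rewrite (H s Ts), (H t Tt), E. ring. Qed.

Variables s0 t0 : R.
Hypotheses (Ts0 : T s0) (Tt0 : T t0) (Hst0 : s0 < t0).
Let l := (t0 - s0) / 8.
Let p0 := s0 + 2 * l.

Lemma Hl : 0 < l.
Proof. unfold l; lra. Qed.

Lemma Ip k : 0 <= k <= 4 -> interior_pt T (p0 + k * l).
Proof. intros Hk. assert (Hl := Hl). exists s0, t0. repeat split; auto; unfold p0, l in *; nra. Qed.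

Lemma Tp k : 0 <= k <= 4 -> T (p0 + k * l).
Proof. intros; apply interior_T; auto; apply Ip; auto. Qed.

Lemma Kp : (x (p0 + 1 * l) - x (p0 + 0 * l)) * (y (p0 + 2 * l) - y (p0 + 3 * l)) =
           (x (p0 + 2 * l) - x (p0 + 1 * l)) * (y (p0 + 3 * l) - y (p0 + 4 * l)).
Proof.
  assert (E : forall k, p0 + k * l + l = p0 + (k+1) * l) by (intros; ring).
  assert (K := Kgen T x y (p0 + 0*l) (p0 + 1*l) (p0 + 2*l) (p0 + 3*l) l HG
     (Tp 0 ltac:(lra)) (Tp 1 ltac:(lra)) (Tp 2 ltac:(lra)) (Tp 3 ltac:(lra))
     ltac:(rewrite E; apply Tp; lra) ltac:(rewrite E; apply Tp; lra) ltac:(rewrite E; apply Tp; lra) ltac:(rewrite E; apply Tp; lra)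
     ltac:(pose Hl; nra) ltac:(pose Hl; nra) ltac:(pose Hl; nra) ltac:(pose Hl; nra)).
  rewrite !E in K. replace (0 + 1) with 1 in K by ring. replace (1 + 1) with 2 in K by ring.
  replace (2 + 1) with 3 in K by ring. replace (3 + 1) with 4 in K by ring. exact K.
Qed.

Lemma rate_exp_exp A1 B1 c1 A2 B2 c2 : c1 <> 0 -> c2 <> 0 ->
  (forall z, T z -> x z = A1 + B1 * exp (c1 * z)) -> (forall z, T z -> y z = A2 + B2 * exp (c2 * z)) -> c2 = - c1.
Proof.
  intros Hc1 Hc2 HX HY.
  assert (K := Kp). rewrite !HX, !HY in K by (apply Tp; lra).
  destruct (exp5 c1 p0 l) as [E0 [E1 [E2 [E3 E4]]]]. destruct (exp5 c2 p0 l) as [F0 [F1 [F2 [F3 F4]]]].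
  rewrite E0, E1, E2, F2, F3, F4 in K.
  assert (B1n := Bnz_xe A1 B1 c1 HX). assert (B2n := Bnz_ye A2 B2 c2 HY).
  assert (Hq1 := exp_ne1 (c1 * l) ltac:(intro H; apply Rmult_integral in H; pose Hl; destruct H; lra)).
  assert (Hq2 := exp_ne1 (c2 * l) ltac:(intro H; apply Rmult_integral in H; pose Hl; destruct H; lra)).
  assert (P1 := exp_pos (c1 * p0)). assert (P2 := exp_pos (c2 * p0)). assert (P3 := exp_pos (c2 * l)).
  set (u1 := exp (c1 * p0)) in *. set (q1 := exp (c1 * l)) in *.
  set (u2 := exp (c2 * p0)) in *. set (q2 := exp (c2 * l)) in *.
  assert (Z : (B1 * u1 * (q1 - 1)) * (B2 * u2 * q2 * q2 * (1 - q2)) * (1 - q1 * q2) = 0).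
  { apply Rminus_diag_eq in K. rewrite <- K. ring. }
  apply Rmult_integral in Z. destruct Z as [Z|Z].
  - exfalso. apply Rmult_integral in Z. destruct Z as [Z|Z].
    + apply Rmult_integral in Z. destruct Z as [Z|Z]; [apply Rmult_integral in Z; destruct Z|]; lra.
    + apply Rmult_integral in Z. destruct Z as [Z|Z]; [|lra].
      repeat (apply Rmult_integral in Z; destruct Z as [Z|Z]); lra.
  - assert (exp (c1 * l + c2 * l) = exp 0) by (rewrite exp_plus, exp_0; fold q1 q2; lra).
    apply exp_inv in H. pose Hl. assert ((c1 + c2) * l = 0) by lra.
    apply Rmult_integral in H0. destruct H0; lra.
Qed.

Lemma rate_exp_aff A1 B1 c1 A2 B2 : c1 <> 0 ->
  (forall z, T z -> x z = A1 + B1 * exp (c1 * z)) -> (forall z, T z -> y z = A2 + B2 * z) -> False.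
Proof.
  intros Hc1 HX HY.
  assert (K := Kp). rewrite !HX, !HY in K by (apply Tp; lra).
  destruct (exp5 c1 p0 l) as [E0 [E1 [E2 [E3 E4]]]].
  rewrite E0, E1, E2 in K.
  assert (B1n := Bnz_xe A1 B1 c1 HX). assert (B2n := Bnz_y A2 B2 HY).
  assert (Hq1 := exp_ne1 (c1 * l) ltac:(intro H; apply Rmult_integral in H; pose Hl; destruct H; lra)).
  assert (P1 := exp_pos (c1 * p0)). pose Hl.
  set (u1 := exp (c1 * p0)) in *. set (q1 := exp (c1 * l)) in *.
  assert (Z : (B1 * u1 * (q1 - 1)) * (B2 * l) * (q1 - 1) = 0).
  { apply Rminus_diag_eq in K. rewrite <- K. ring. }
  repeat (apply Rmult_integral in Z; destruct Z as [Z|Z]); lra.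
Qed.

Lemma rate_aff_exp A1 B1 A2 B2 c2 : c2 <> 0 ->
  (forall z, T z -> x z = A1 + B1 * z) -> (forall z, T z -> y z = A2 + B2 * exp (c2 * z)) -> False.
Proof.
  intros Hc2 HX HY.
  assert (K := Kp). rewrite !HX, !HY in K by (apply Tp; lra).
  destruct (exp5 c2 p0 l) as [F0 [F1 [F2 [F3 F4]]]].
  rewrite F2, F3, F4 in K.
  assert (B1n := Bnz_x A1 B1 HX). assert (B2n := Bnz_ye A2 B2 c2 HY).
  assert (Hq2 := exp_ne1 (c2 * l) ltac:(intro H; apply Rmult_integral in H; pose Hl; destruct H; lra)).
  assert (P2 := exp_pos (c2 * p0)). assert (P3 := exp_pos (c2 * l)). pose Hl.
  set (u2 := exp (c2 * p0)) in *. set (q2 := exp (c2 * l)) in *.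
  assert (Z : (B1 * l) * (B2 * u2 * q2 * q2 * (1 - q2)) * (1 - q2) = 0).
  { apply Rminus_diag_eq in K. rewrite <- K. ring. }
  repeat (apply Rmult_integral in Z; destruct Z as [Z|Z]); lra.
Qed.

End Main.

Section Main2.
Variables (T : R -> Prop) (x y : R -> R).
Hypothesis HI : is_interval T.
Hypothesis Hxm : nondecr_on T x.
Hypothesis Hym : nonincr_on T y.
Hypothesis Hpos : forall t, interior_pt T t -> 0 < x t /\ 0 < y t.
Hypothesis HG : Ginv T x y.
Hypothesis Hnx : ~ const_on T x.
Hypothesis Hny : ~ const_on T y.
Variables s0 t0 : R.
Hypotheses (Ts0 : T s0) (Tt0 : T t0) (Hst0 : s0 < t0).
Let l := (t0 - s0) / 8.
Let p0 := s0 + 2 * l.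

Lemma Gshift k : 0 <= k <= 2 -> G x y (p0 + k * l) (p0 + (k+1) * l) = G x y (p0 + (k+1) * l) (p0 + (k+2) * l).
Proof.
  intros Hk. assert (Hl' := Hl s0 t0 Hst0). fold l in Hl'.
  assert (E : forall j, p0 + j * l + l = p0 + (j+1) * l) by (intros; ring).
  assert (Tp' : forall j, 0 <= j <= 4 -> T (p0 + j * l)) by (intros; apply (Tp T HI s0 t0 Ts0 Tt0 Hst0); auto).
  rewrite (HG (p0 + k * l) (p0 + (k+1) * l) l); try (apply Tp'; lra); try (rewrite E; apply Tp'; lra); try nra.
  rewrite !E. replace (k + 1 + 1) with (k + 2) by ring. reflexivity.
Qed.

Lemma exp_exp_zero A1 B1 c1 A2 B2 c2 : c1 <> 0 -> c2 = - c1 ->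
  (forall z, T z -> x z = A1 + B1 * exp (c1 * z)) -> (forall z, T z -> y z = A2 + B2 * exp (c2 * z)) -> A1 = 0 /\ A2 = 0.
Proof.
  intros Hc1 Hc2 HX HY.
  assert (Hl' := Hl s0 t0 Hst0). fold l in Hl'.
  assert (Tp' : forall j, 0 <= j <= 4 -> T (p0 + j * l)) by (intros; apply (Tp T HI s0 t0 Ts0 Tt0 Hst0); auto).
  assert (E01 := Gshift 0 ltac:(lra)). assert (E12 := Gshift 1 ltac:(lra)).
  replace (0 + 1) with 1 in E01 by ring. replace (0 + 2) with 2 in E01 by ring.
  replace (1 + 1) with 2 in E12 by ring. replace (1 + 2) with 3 in E12 by ring.
  unfold G in E01, E12. rewrite !HX, !HY in E01, E12 by (apply Tp'; lra).
  destruct (exp5 c1 p0 l) as [E0 [E1 [E2 [E3 E4]]]]. destruct (exp5 c2 p0 l) as [F0 [F1 [F2 [F3 F4]]]].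
  rewrite E0, E1, E2, F0, F1, F2 in E01. rewrite E1, E2, E3, F1, F2, F3 in E12.
  assert (U : exp (c2 * p0) = / exp (c1 * p0)) by (rewrite Hc2, <- exp_Ropp; f_equal; ring).
  assert (Q : exp (c2 * l) = / exp (c1 * l)) by (rewrite Hc2, <- exp_Ropp; f_equal; ring).
  rewrite U, Q in E01, E12.
  assert (B1n := Bnz_xe T x Hnx A1 B1 c1 HX). assert (B2n := Bnz_ye T y Hny A2 B2 c2 HY).
  assert (Hq1 := exp_ne1 (c1 * l) ltac:(intro H; apply Rmult_integral in H; destruct H; lra)).
  assert (P1 := exp_pos (c1 * p0)). assert (P3 := exp_pos (c1 * l)).
  set (u := exp (c1 * p0)) in *. set (q := exp (c1 * l)) in *.
  assert (Z1 : (q-1)^2 * (A1*B2/(u*q^2) - B1*A2*u) = 0).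
  { apply Rminus_diag_eq in E01. rewrite <- E01. field. lra. }
  assert (Z2 : (q-1)^2 * (A1*B2/(u*q^3) - B1*A2*u*q) = 0).
  { apply Rminus_diag_eq in E12. rewrite <- E12. field. lra. }
  assert (Hq0 : (q - 1)^2 <> 0) by (apply pow_nonzero; lra).
  apply Rmult_integral in Z1. destruct Z1 as [Z1|Z1]; [contradiction|].
  apply Rmult_integral in Z2. destruct Z2 as [Z2|Z2]; [contradiction|].
  assert (W1 : A1*B2 = B1*A2*u*u*q*q).
  { replace (A1*B2) with ((A1*B2/(u*q^2)) * (u*q^2)) by (field; lra). rewrite (Rminus_diag_uniq _ _ Z1). ring. }
  assert (W2 : A1*B2 = B1*A2*u*u*q*q*q*q).
  { replace (A1*B2) with ((A1*B2/(u*q^3)) * (u*q^3)) by (field; lra). rewrite (Rminus_diag_uniq _ _ Z2). ring. }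
  assert (Z : (B1 * A2) * (u*u*q*q) * ((q - 1) * (q + 1)) = 0).
  { replace 0 with (A1*B2 - A1*B2) by ring. rewrite W1 at 2. rewrite W2. ring. }
  assert (A2 = 0).
  { repeat (apply Rmult_integral in Z; destruct Z as [Z|Z]); try lra. }
  split; auto. subst A2. rewrite Rmult_0_r, !Rmult_0_l in W1.
  apply Rmult_integral in W1. destruct W1; lra.
Qed.

End Main2.


Section Main.
Variables (T : R -> Prop) (x y : R -> R).
Hypothesis HI : is_interval T.
Hypothesis Hxm : nondecr_on T x.
Hypothesis Hym : nonincr_on T y.
Hypothesis Hxc : cont_on T x.
Hypothesis Hyc : cont_on T y.
Hypothesis Hpos : forall t, interior_pt T t -> 0 < x t /\ 0 < y t.
Hypothesis HG : Ginv T x y.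
Hypothesis Hnx : ~ const_on T x.
Hypothesis Hny : ~ const_on T y.

Lemma caseB t0 : T t0 -> Xinc T x t0 -> Yd T y t0 ->
 (exists a b c d, 0 < b /\ 0 < d /\ (forall t, T t -> x t = a + b * t /\ y t = c - d * t) /\
    (forall s t, T s -> T t -> s < t -> G x y s t = (a * d + b * c) * (t - s) - b * d * (t - s) ^ 2)) \/
 (exists a b c, 0 < a /\ 0 < b /\ 0 < c /\ (forall t, T t -> x t = a * exp (c * t) /\ y t = b * exp (- (c * t))) /\
    (forall s t, T s -> T t -> s < t -> G x y s t = 2 * a * b * (1 - exp (- (c * (t - s)))))).
Proof.
  intros Tt0 X0 Y0.
  destruct (nonconst_two T x Hnx) as [s0 [t1 [Ts0 [Tt1 [Hst _]]]]].
  assert (Hz : exists z, interior_pt T z) by (apply ex_interior; exists s0, t1; auto).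
  assert (AllY := allYd T x y HI Hxm Hym Hyc HG t0 Tt0 X0 Y0).
  assert (AllX := allXinc T x y HI Hxm Hym Hxc HG t0 Tt0 X0 Y0).
  assert (Fx := formX T x y HI Hxc HG AllY Hz).
  assert (Fy := formY T x y HI Hyc HG AllX Hz).
  set (zm := (s0 + t1) / 2).
  assert (Iz : interior_pt T zm) by (exists s0, t1; repeat split; auto; unfold zm; lra).
  set (z2 := (zm + t1) / 2).
  assert (Iz2 : interior_pt T z2) by (exists s0, t1; repeat split; auto; unfold z2, zm; lra).
  assert (Hz2 : zm < z2) by (unfold z2, zm; lra).
  destruct Fx as [[A1 [B1 [c1 [Hc1 HX]]]] | [A1 [B1 HX]]];
  destruct Fy as [[A2 [B2 [c2 [Hc2 HY]]]] | [A2 [B2 HY]]].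
  - assert (Ec := rate_exp_exp T x y HI HG Hnx Hny s0 t1 Ts0 Tt1 Hst A1 B1 c1 A2 B2 c2 Hc1 Hc2 HX HY).
    destruct (exp_exp_zero T x y HI HG Hnx Hny s0 t1 Ts0 Tt1 Hst A1 B1 c1 A2 B2 c2 Hc1 Ec HX HY) as [EA1 EA2].
    subst A1 A2 c2.
    assert (TI : forall z, interior_pt T z -> T z) by (intros; apply interior_T; auto).
    assert (HB1 : 0 < B1).
    { destruct (Hpos zm Iz) as [P _]. rewrite HX in P by auto. assert (E := exp_pos (c1 * zm)). nra. }
    assert (HB2 : 0 < B2).
    { destruct (Hpos zm Iz) as [_ P]. rewrite HY in P by auto. assert (E := exp_pos (- c1 * zm)). nra. }
    assert (Hc : 0 < c1).
    { destruct (Rtotal_order c1 0) as [C|[C|C]]; auto; [|contradiction].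
      assert (x zm <= x z2) by (apply Hxm; auto; lra).
      rewrite !HX in H by auto.
      assert (exp (c1 * z2) < exp (c1 * zm)) by (apply exp_increasing; nra). nra. }
    right. exists B1, B2, c1. split; [auto|]. split; [auto|]. split; [auto|]. split.
    + intros t Tt. rewrite HX, HY by auto. split; [ring|]. replace (- c1 * t) with (- (c1 * t)) by ring. ring.
    + intros s t Ts Tt Hst'. unfold G. rewrite !HX, !HY by auto.
      replace (- c1 * s) with (- (c1 * s)) by ring. replace (- c1 * t) with (- (c1 * t)) by ring.
      assert (E1 : exp (c1 * s) * exp (- (c1 * s)) = 1) by (rewrite <- exp_plus; replace (c1 * s + - (c1 * s)) with 0 by ring; apply exp_0).
      assert (E2 : exp (c1 * t) * exp (- (c1 * t)) = 1) by (rewrite <- exp_plus; replace (c1 * t + - (c1 * t)) with 0 by ring; apply exp_0).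
      assert (E3 : exp (c1 * s) * exp (- (c1 * t)) = exp (- (c1 * (t - s)))) by (rewrite <- exp_plus; f_equal; ring).
      rewrite <- E3. apply Rminus_diag_uniq.
      transitivity (B1*B2*(exp (c1*s) * exp (-(c1*s)) - 1) + B1*B2*(exp (c1*t) * exp (-(c1*t)) - 1)).
      * ring.
      * rewrite E1, E2. ring.
  - exfalso. exact (rate_exp_aff T x y HI HG Hnx Hny s0 t1 Ts0 Tt1 Hst A1 B1 c1 A2 B2 Hc1 HX HY).
  - exfalso. exact (rate_aff_exp T x y HI HG Hnx Hny s0 t1 Ts0 Tt1 Hst A1 B1 A2 B2 c2 Hc2 HX HY).
  - left. assert (HB1 := slope_pos T x Hxm A1 B1 HX Hnx). assert (HB2 := slope_neg T y Hym A2 B2 HY Hny).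
    exists A1, B1, A2, (- B2). split; [auto|]. split; [lra|]. split.
    + intros t Tt. rewrite HX, HY by auto. split; ring.
    + intros s t Ts Tt Hst'. unfold G. rewrite !HX, !HY by auto. ring.
Qed.

End Main.


Lemma exp_id1 c s : exp (c * s) * exp (- (c * s)) = 1.
Proof. rewrite <- exp_plus; replace (c * s + - (c * s)) with 0 by ring; apply exp_0. Qed.

Lemma phi_on_D T x y phi (f : R -> R) : phi_eq T x y phi ->
  (forall s t, T s -> T t -> s < t -> G x y s t = f (t - s)) -> forall u, inD T u -> phi u = f u.
Proof.
  intros Hphi H u [s [t [Ts [Tt [Hst Hu]]]]]. subst u. rewrite <- Hphi by auto. apply H; auto.
Qed.

Lemma forward (T : R -> Prop) (x y : R -> R) phi : is_interval T -> decreasing_path T x y ->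
  phi_eq T x y phi ->
    (case_i T x y phi \/ case_ii T x y phi \/ case_iii T x y phi \/ case_iv T x y phi).
Proof.
  intros HI [Hxm [Hym [Hxc [Hyc [Hpos Hnc]]]]] Hphi.
  assert (HG := phi_Ginv T x y phi Hphi).
  destruct (classic (const_on T x)) as [Cx|Nx].
  - assert (Ny : ~ const_on T y) by (destruct Hnc; tauto).
    destruct (case_xconst T x y HI Hym Hyc Hpos HG Cx Ny) as [a [b [c [Ha [Hc [Hf HGf]]]]]].
    left. exists a, b, c. split; [auto|]. split; [auto|]. split.
    + left. exact Hf.
    + apply (phi_on_D T x y phi (fun u => a * c * u) Hphi). intros; apply HGf; auto.
  - destruct (classic (const_on T y)) as [Cy|Ny].
    + destruct (case_yconst T x y HI Hxm Hxc Hpos HG Cy Nx) as [a [b [c [Ha [Hc [Hf HGf]]]]]].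
      left. exists a, b, c. split; [auto|]. split; [auto|]. split.
      * right. exact Hf.
      * apply (phi_on_D T x y phi (fun u => a * c * u) Hphi). intros; apply HGf; auto.
    + destruct (classic (exists t0, T t0 /\ Xinc T x t0 /\ Yd T y t0)) as [[t0 [Tt0 [X0 Y0]]]|HA].
      * destruct (caseB T x y HI Hxm Hym Hxc Hyc Hpos HG Nx Ny t0 Tt0 X0 Y0) as
          [[a [b [c [d [Hb [Hd [Hf HGf]]]]]]] | [a [b [c [Ha [Hb [Hc [Hf HGf]]]]]]]].
        -- right; right; left. exists a, b, c, d. split; [auto|]. split; [auto|]. split; [auto|].
           apply (phi_on_D T x y phi (fun u => (a * d + b * c) * u - b * d * u ^ 2) Hphi). intros; apply HGf; auto.
        -- right; right; right. exists a, b, c. split; [auto|]. split; [auto|]. split; [auto|]. split; [auto|].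
           apply (phi_on_D T x y phi (fun u => 2 * a * b * (1 - exp (- (c * u)))) Hphi). intros; apply HGf; auto.
      * assert (HA' : forall t, T t -> ~ (Xinc T x t /\ Yd T y t)) by (intros t Tt [X Y]; apply HA; exists t; auto).
        destruct (caseA3 T x y HI Hxm Hym Hxc Hyc Hpos HG Nx Ny HA') as
          [s [a [b [c [d [Is [Ha [Hb [Hc [Hd [Hacbd [Hf HGf]]]]]]]]]]]].
        right; left. exists s, a, b, c, d. repeat (split; [auto|]).
        apply (phi_on_D T x y phi (fun u => a * c * u) Hphi). intros; apply HGf; auto.
Qed.

Lemma backward (T : R -> Prop) (x y : R -> R) phi :
    (case_i T x y phi \/ case_ii T x y phi \/ case_iii T x y phi \/ case_iv T x y phi) -> phi_eq T x y phi.
Proof.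
  intros H s t Ts Tt Hst.
  assert (D : inD T (t - s)) by (exists s, t; auto).
  destruct H as [[a [b [c [Ha [Hc [[Hf|Hf] Hp]]]]]] | [[sst [a [b [c [d [Is [Ha [Hb [Hc [Hd [Hacbd [Hf Hp]]]]]]]]]]]] |
                 [[a [b [c [d [Hb [Hd [Hf Hp]]]]]]] | [a [b [c [Ha [Hb [Hc [Hf Hp]]]]]]]]]];
    rewrite (Hp _ D); destruct (Hf s Ts) as [F1 F2]; destruct (Hf t Tt) as [F3 F4]; rewrite F1, F2, F3, F4.
  - ring.
  - ring.
  - destruct (Rlt_dec sst s); destruct (Rle_dec s sst); destruct (Rlt_dec sst t); destruct (Rle_dec t sst);
      try lra; nra.
  - ring.
  - replace (- (c * (t - s))) with (c * s + - (c * t)) by ring. rewrite exp_plus.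
    transitivity (a * b * (exp (c * s) * exp (- (c * s))) + a * b * (exp (c * t) * exp (- (c * t))) - 2 * a * b * (exp (c * s) * exp (- (c * t)))).
    + ring.
    + rewrite !exp_id1. ring.
Qed.

Theorem lemma2 (T : R -> Prop) (x y : R -> R) :
  is_interval T -> decreasing_path T x y ->
  forall phi : R -> R,
    phi_eq T x y phi <->
    (case_i T x y phi \/ case_ii T x y phi \/ case_iii T x y phi \/
     case_iv T x y phi).
Proof.
  intros HI Hd phi. split.
  - apply forward; auto.
  - apply backward.
Qed.
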